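(* Let $\lambda_1,\lambda_2>0$, $u^*>0$, $\delta>0$, $\varepsilon>0$ and $\beta\ge0$ with $\varepsilon\lambda_2+\beta<u^*$. Consider the system $\dot\eta_1=u^*-u-\phi_2(\eta_2)$, $\dot\eta_2=u^*-u+\phi_1(\eta_1)$ under the feedback $$u=u^*+\varepsilon\phi_2(\eta_2)+\beta\frac{\varphi(\eta)}{\sqrt{\delta^2+(\min(0,\varphi(\eta)))^2}},\qquad \varphi(\eta)=\phi_1(\eta_1)+(1+\varepsilon)\phi_2(\eta_2).$$ Then the origin $\eta=0$ of the closed-loop system is globally asymptotically stable and locally exponentially stable, and $u(t)>0$ for all $t\ge0$ along every closed-loop solution.
   Context: $\phi_1(\eta_1)=\frac1{\lambda_1}(1-e^{-\eta_1})$, $\phi_2(\eta_2)=\lambda_2(e^{\eta_2}-1)$. *)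

(* Defs.v *)
From Stdlib Require Import Reals.
From Coquelicot Require Import Coquelicot.
Open Scope R_scope.

Definition phi1 (l1 e1 : R) : R := (1 - exp (- e1)) / l1.
Definition phi2 (l2 e2 : R) : R := l2 * (exp e2 - 1).

Definition varphi (l1 l2 eps : R) (eta : R * R) : R :=
  phi1 l1 (fst eta) + (1 + eps) * phi2 l2 (snd eta).

Definition u_fb (l1 l2 ustar delta eps beta : R) (eta : R * R) : R :=
  ustar + eps * phi2 l2 (snd eta)
  + beta * varphi l1 l2 eps eta
      / sqrt (delta ^ 2 + (Rmin 0 (varphi l1 l2 eps eta)) ^ 2).

Definition cl_f1 (l1 l2 ustar delta eps beta : R) (eta : R * R) : R :=
  ustar - u_fb l1 l2 ustar delta eps beta eta - phi2 l2 (snd eta).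
Definition cl_f2 (l1 l2 ustar delta eps beta : R) (eta : R * R) : R :=
  ustar - u_fb l1 l2 ustar delta eps beta eta + phi1 l1 (fst eta).

Definition norm2 (p : R * R) : R := sqrt (fst p ^ 2 + snd p ^ 2).

Definition is_solution (F1 F2 : R * R -> R) (x : R -> R * R) : Prop :=
  filterlim (fun t => fst (x t)) (at_right 0) (locally (fst (x 0))) /\
  filterlim (fun t => snd (x t)) (at_right 0) (locally (snd (x 0))) /\
  (forall t, 0 < t ->
     is_derive (fun s => fst (x s)) t (F1 (x t)) /\
     is_derive (fun s => snd (x s)) t (F2 (x t))).

Definition forward_complete (F1 F2 : R * R -> R) : Prop :=
  forall x0 : R * R, exists x, is_solution F1 F2 x /\ x 0 = x0.

Definition lyap_stable (F1 F2 : R * R -> R) : Prop :=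
  forall e, 0 < e -> exists d, 0 < d /\
    forall x, is_solution F1 F2 x -> norm2 (x 0) < d ->
      forall t, 0 <= t -> norm2 (x t) < e.

Definition glob_attractive (F1 F2 : R * R -> R) : Prop :=
  forall x, is_solution F1 F2 x -> is_lim (fun t => norm2 (x t)) p_infty 0.

Definition GAS (F1 F2 : R * R -> R) : Prop :=
  F1 (0, 0) = 0 /\ F2 (0, 0) = 0 /\
  forward_complete F1 F2 /\ lyap_stable F1 F2 /\ glob_attractive F1 F2.

Definition LES (F1 F2 : R * R -> R) : Prop :=
  exists r k c, 0 < r /\ 0 < k /\ 0 < c /\
    forall x, is_solution F1 F2 x -> norm2 (x 0) < r ->
      forall t, 0 <= t -> norm2 (x t) <= k * exp (- c * t) * norm2 (x 0).

(* Main.v *)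
Require Import Defs.
From Stdlib Require Import Reals Lra Psatz.
From Coquelicot Require Import Coquelicot.
Open Scope R_scope.

Lemma cont_of_derive f x l : is_derive f x l -> continuity_pt f x.
Proof.
  intro H. apply continuity_pt_filterlim.
  apply (ex_derive_continuous (V:=R_NormedModule)). exists l. exact H.
Qed.

Lemma mvt_le f df a b : a <= b ->
  (forall x, a <= x <= b -> is_derive f x (df x)) ->
  (forall x, a <= x <= b -> 0 <= df x) -> f a <= f b.
Proof.
  intros Hab Hd Hp.
  destruct (MVT_gen f a b df) as [c [Hc E]].
  - intros x Hx. apply Hd. rewrite Rmin_left in Hx by lra. rewrite Rmax_right in Hx by lra. lra.
  - intros x Hx. apply (cont_of_derive _ _ (df x)). apply Hd.
    rewrite Rmin_left in Hx by lra. rewrite Rmax_right in Hx by lra. lra.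
  - rewrite Rmin_left in Hc by lra. rewrite Rmax_right in Hc by lra.
    assert (0 <= df c) by (apply Hp; lra). nra.
Qed.

Lemma mvt_abs f df a b K :
  (forall x, Rmin a b <= x <= Rmax a b -> is_derive f x (df x) /\ Rabs (df x) <= K) ->
  Rabs (f b - f a) <= K * Rabs (b - a).
Proof.
  intros H.
  destruct (MVT_gen f a b df) as [c [Hc E]].
  - intros x Hx. apply H. lra.
  - intros x Hx. apply (cont_of_derive _ _ (df x)). apply H. lra.
  - rewrite E, Rabs_mult. apply Rmult_le_compat_r. apply Rabs_pos. apply H. lra.
Qed.

Lemma is_derive_Ropp f x l : is_derive f x l -> is_derive (fun u => - f u) x (- l).
Proof.
  intro H. apply (is_derive_ext (K:=R_AbsRing) (V:=R_NormedModule) (fun u => -1 * f u)). intro t; simpl; ring.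
  replace (- l) with (-1 * l) by ring. apply is_derive_scal. exact H.
Qed.

Lemma nonincr (g dg : R -> R) :
  (forall t, 0 < t -> is_derive g t (dg t)) ->
  (forall t, 0 < t -> dg t <= 0) ->
  filterlim g (at_right 0) (locally (g 0)) ->
  forall t, 0 <= t -> g t <= g 0.
Proof.
  intros Hd Hn Hc t Ht.
  assert (Hst : forall s, 0 < s <= t -> g t <= g s).
  { intros s Hs. cut (- g s <= - g t). lra.
    apply (mvt_le (fun u => - g u) (fun u => - dg u)). lra.
    intros x Hx. apply is_derive_Ropp. apply Hd. lra.
    intros x Hx. assert (dg x <= 0) by (apply Hn; lra). lra. }
  destruct (Rle_or_lt (g t) (g 0)) as [H|H]; auto.
  exfalso. destruct (Req_dec t 0) as [->|Ht0]; [lra|].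
  pose proof (proj1 (filterlim_locally (F:=at_right 0) (U:=R_UniformSpace) g (g 0)) Hc) as Hc'. clear Hc. rename Hc' into Hc.
  assert (Hp : 0 < g t - g 0) by lra.
  specialize (Hc (mkposreal _ Hp)).
  destruct Hc as [d Hdd]. simpl in Hdd.
  set (s := Rmin (d/2) (t/2)).
  assert (Hs1 : 0 < s) by (unfold s; apply Rmin_pos; destruct d; simpl; lra).
  assert (Hs2 : s <= t/2) by apply Rmin_r.
  assert (Hs3 : s <= d/2) by apply Rmin_l.
  assert (B : ball 0 d s).
  { apply ball_sym. change (Rabs (0 - s) < d). rewrite Rabs_left by lra. destruct d; simpl in *; lra. }
  specialize (Hdd s B Hs1).
  change (Rabs (g s - g 0) < g t - g 0) in Hdd.
  assert (g t <= g s) by (apply Hst; lra).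
  apply Rabs_def2 in Hdd. lra.
Qed.

Lemma exp_le_exp x y : x <= y -> exp x <= exp y.
Proof. intros [H|H]. left; apply exp_increasing; auto. subst; lra. Qed.

Lemma expR_ge1 R : 0 <= R -> 1 <= exp R.
Proof. intro. pose proof (exp_ineq1_le R). lra. Qed.

Lemma exp_lip R x y : Rabs x <= R -> Rabs y <= R ->
  Rabs (exp x - exp y) <= exp R * Rabs (x - y).
Proof.
  intros Hx Hy. apply (mvt_abs exp exp y x (exp R)).
  intros z Hz. split. apply is_derive_exp.
  rewrite Rabs_pos_eq by (left; apply exp_pos).
  apply exp_le_exp.
  assert (Rmin y x <= z <= Rmax y x) by exact Hz.
  apply Rabs_le_between in Hx. apply Rabs_le_between in Hy.
  unfold Rmin, Rmax in *. destruct (Rle_dec y x); lra.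
Qed.

Lemma exp_m1_lower R y : Rabs y <= R -> y ^ 2 / exp R <= y * (exp y - 1).
Proof.
  intros Hy.
  destruct (MVT_gen exp 0 y exp) as [c [Hc E]].
  - intros. apply is_derive_exp.
  - intros. apply (cont_of_derive _ _ (exp x)). apply is_derive_exp.
  - rewrite exp_0 in E. rewrite E.
    assert (Hc' : - R <= c) by (apply Rabs_le_between in Hy; unfold Rmin, Rmax in Hc; destruct (Rle_dec 0 y); lra).
    assert (exp (-R) <= exp c) by (apply exp_le_exp; exact Hc').
    rewrite exp_Ropp in H.
    assert (0 < exp R) by apply exp_pos.
    assert (y^2 / exp R <= exp c * y^2).
    { unfold Rdiv. rewrite Rmult_comm. apply Rmult_le_compat_r. nra. exact H. }
    nra.
Qed.

Lemma exp_m1_upper R y : Rabs y <= R -> Rabs (exp y - 1) <= exp R * Rabs y.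
Proof.
  intro Hy. rewrite <- exp_0. replace y with (y - 0) at 2 by ring. apply exp_lip; auto.
  rewrite Rabs_R0. pose proof (Rabs_pos y). lra.
Qed.

Lemma exp_quad_lower R y : Rabs y <= R -> y ^ 2 / (2 * exp R) <= exp y - 1 - y.
Proof.
  intros Hy. set (E := exp R).
  assert (HR : 0 <= R) by (pose proof (Rabs_pos y); lra).
  assert (HE : 1 <= E) by (apply expR_ge1; auto).
  set (h := fun z => exp z - 1 - z - z ^ 2 / (2 * E)).
  assert (Hd : forall z, is_derive h z (exp z - 1 - z / E)).
  { intro z. unfold h. auto_derive; auto. field. lra. }
  cut (0 <= h y). unfold h. lra.
  destruct (Rle_or_lt 0 y) as [Hy0|Hy0].
  - replace 0 with (h 0) by (unfold h; rewrite exp_0; field; lra).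
    apply (mvt_le h (fun z => exp z - 1 - z / E) 0 y Hy0). intros; apply Hd.
    intros z Hz. pose proof (exp_ineq1_le z).
    assert (z / E <= z). { apply Rmult_le_reg_r with E. lra. unfold Rdiv; rewrite Rmult_assoc, Rinv_l by lra. nra. }
    lra.
  - replace 0 with (h 0) at 1 by (unfold h; rewrite exp_0; field; lra).
    apply Ropp_le_cancel.
    apply (mvt_le (fun u => - h u) (fun z => - (exp z - 1 - z / E)) y 0). lra.
    intros; apply is_derive_Ropp, Hd.
    intros z Hz. assert (Hz' : Rabs z <= R) by (apply Rabs_le_between in Hy; apply Rabs_le_between; lra).
    pose proof (exp_m1_lower R z Hz'). fold E in H.
    destruct (Req_dec z 0) as [->|Hz0]. rewrite exp_0. unfold Rdiv; lra.
    assert (z < 0) by lra.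
    assert (exp z - 1 <= z / E).
    { apply Rmult_le_reg_l with (- z). lra.
      replace (- z * (z / E)) with (-(z^2/E)) by (field; lra). nra. }
    lra.
Qed.

Lemma exp_quad_upper R y : Rabs y <= R -> exp y - 1 - y <= exp R * y ^ 2 / 2.
Proof.
  intros Hy. set (E := exp R).
  assert (HR : 0 <= R) by (pose proof (Rabs_pos y); lra).
  assert (HE : 1 <= E) by (apply expR_ge1; auto).
  set (h := fun z => E * z ^ 2 / 2 - (exp z - 1 - z)).
  assert (Hd : forall z, is_derive h z (E * z - exp z + 1)).
  { intro z. unfold h. auto_derive; auto. field. }
  cut (0 <= h y). unfold h. lra.
  destruct (Rle_or_lt 0 y) as [Hy0|Hy0].
  - replace 0 with (h 0) by (unfold h; rewrite exp_0; field).
    apply (mvt_le h (fun z => E * z - exp z + 1) 0 y Hy0). intros; apply Hd.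
    intros z Hz. assert (Hz' : Rabs z <= R) by (apply Rabs_le_between in Hy; apply Rabs_le_between; lra).
    pose proof (exp_m1_upper R z Hz'). fold E in H.
    rewrite (Rabs_pos_eq z) in H by lra. apply Rabs_le_between in H. lra.
  - replace 0 with (h 0) at 1 by (unfold h; rewrite exp_0; field).
    apply Ropp_le_cancel.
    apply (mvt_le (fun u => - h u) (fun z => - (E * z - exp z + 1)) y 0). lra.
    intros; apply is_derive_Ropp, Hd.
    intros z Hz. pose proof (exp_ineq1_le z). nra.
Qed.

Lemma exp_ge_2y y : 0 <= y -> 2 * y <= exp y.
Proof.
  intro Hy. replace y with (y/2 + y/2) at 2 by field. rewrite exp_plus.
  pose proof (exp_ineq1_le (y/2)).
  assert ((1+y/2)*(1+y/2) <= exp (y/2) * exp (y/2)) by (apply Rmult_le_compat; lra).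
  assert (0 <= (y/2 - 1)*(y/2-1)) by apply Rle_0_sqr.
  lra.
Qed.

Definition sfun (d p : R) : R := p / sqrt (d ^ 2 + (Rmin 0 p) ^ 2).

Lemma sq_ge d p : 0 < d -> d <= sqrt (d ^ 2 + (Rmin 0 p) ^ 2).
Proof.
  intro Hd. rewrite <- (sqrt_pow2 d) at 1 by lra. apply sqrt_le_1_alt.
  pose proof (pow2_ge_0 (Rmin 0 p)). lra.
Qed.

Lemma s_phi d p : 0 < d -> d * sfun d p ^ 2 <= sfun d p * p.
Proof.
  intro Hd. unfold sfun. set (q := sqrt (d ^ 2 + (Rmin 0 p) ^ 2)).
  assert (Hq : d <= q) by apply sq_ge, Hd.
  replace (d * (p / q) ^ 2) with ((d / q) * (p^2 / q)) by (field; lra).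
  replace (p / q * p) with (p^2/q) by (field; lra).
  assert (0 <= p^2/q) by (apply Rmult_le_pos; [apply pow2_ge_0 | left; apply Rinv_0_lt_compat; lra]).
  assert (d / q <= 1) by (apply Rmult_le_reg_r with q; [lra|]; unfold Rdiv; rewrite Rmult_assoc, Rinv_l by lra; lra).
  assert (0 <= d/q) by (apply Rmult_le_pos; [lra | left; apply Rinv_0_lt_compat; lra]).
  nra.
Qed.

Lemma s_phi_pos d p : 0 < d -> 0 <= sfun d p * p.
Proof. intro Hd. pose proof (s_phi d p Hd). pose proof (pow2_ge_0 (sfun d p)). nra. Qed.

Lemma s_abs d p : 0 < d -> Rabs (sfun d p) <= Rabs p / d.
Proof.
  intro Hd. unfold sfun. set (q := sqrt (d ^ 2 + (Rmin 0 p) ^ 2)).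
  assert (Hq : d <= q) by apply sq_ge, Hd.
  unfold Rdiv. rewrite Rabs_mult, Rabs_inv, (Rabs_pos_eq q) by lra.
  apply Rmult_le_compat_l. apply Rabs_pos. apply Rinv_le_contravar; lra.
Qed.

Lemma s_gt_m1 d p : 0 < d -> -1 < sfun d p.
Proof.
  intro Hd. unfold sfun. set (q := sqrt (d ^ 2 + (Rmin 0 p) ^ 2)).
  assert (Hq : d <= q) by apply sq_ge, Hd.
  destruct (Rle_or_lt 0 p) as [Hp|Hp].
  - assert (0 <= p / q) by (apply Rmult_le_pos; [lra | left; apply Rinv_0_lt_compat; lra]). lra.
  - assert (Hm : Rmin 0 p = p) by (apply Rmin_right; lra).
    assert (Hq2 : - p < q).
    { unfold q. rewrite Hm. rewrite <- (sqrt_pow2 (-p)) by lra. apply sqrt_lt_1_alt.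
      split. apply pow2_ge_0. nra. }
    apply Rmult_lt_reg_r with q. lra. unfold Rdiv. rewrite Rmult_assoc, Rinv_l by lra. lra.
Qed.

Definition kfun d p := p / sqrt (d ^ 2 + p ^ 2).

Lemma kfun_derive d p : 0 < d ->
  is_derive (kfun d) p (d ^ 2 / ((d ^ 2 + p ^ 2) * sqrt (d ^ 2 + p ^ 2))).
Proof.
  intro Hd. unfold kfun.
  assert (H0 : 0 < d ^ 2 + p ^ 2) by (pose proof (pow2_ge_0 p); nra).
  assert (Hs : 0 < sqrt (d ^ 2 + p ^ 2)) by (apply sqrt_lt_R0; lra).
  auto_derive;
  replace (d * (d * 1) + p * (p * 1)) with (d ^ 2 + p ^ 2) by ring.
  - split. lra. split. lra. auto.
  - set (S := sqrt (d ^ 2 + p ^ 2)) in *.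
    assert (E : S * S = d ^ 2 + p ^ 2) by (apply sqrt_sqrt; lra).
    rewrite E. field. split; lra.
Qed.

Lemma s_pos_eq d p : 0 < d -> 0 <= p -> sfun d p = p / d.
Proof.
  intros Hd Hp. unfold sfun. rewrite Rmin_left by lra.
  replace (d ^ 2 + 0 ^ 2) with (d ^ 2) by ring. rewrite sqrt_pow2 by lra. reflexivity.
Qed.

Lemma s_neg_eq d p : p <= 0 -> sfun d p = kfun d p.
Proof. intros Hp. unfold sfun, kfun. rewrite Rmin_right by lra. reflexivity. Qed.

Lemma k_lip d p q : 0 < d -> Rabs (kfun d p - kfun d q) <= Rabs (p - q) / d.
Proof.
  intro Hd. unfold Rdiv. rewrite Rmult_comm.
  apply (mvt_abs (kfun d) (fun x => d ^ 2 / ((d ^ 2 + x ^ 2) * sqrt (d ^ 2 + x ^ 2)))).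
  intros x _. split. apply kfun_derive; auto.
  assert (H0 : d ^ 2 <= d ^ 2 + x ^ 2) by (pose proof (pow2_ge_0 x); lra).
  assert (Hs : d <= sqrt (d ^ 2 + x ^ 2)).
  { rewrite <- (sqrt_pow2 d) at 1 by lra. apply sqrt_le_1_alt. lra. }
  assert (0 < d^2) by nra.
  rewrite Rabs_pos_eq.
  - apply Rmult_le_reg_r with ((d ^ 2 + x ^ 2) * sqrt (d ^ 2 + x ^ 2)). nra.
    unfold Rdiv. rewrite Rmult_assoc, Rinv_l by nra.
    assert (d ^ 2 * d <= (d ^ 2 + x ^ 2) * sqrt (d ^ 2 + x ^ 2)) by (apply Rmult_le_compat; nra).
    set (Q := (d ^ 2 + x ^ 2) * sqrt (d ^ 2 + x ^ 2)) in *.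
    assert (E : / d * Q - d ^ 2 * 1 = (Q - d ^ 2 * d) * / d) by (field; lra).
    assert (0 <= (Q - d ^ 2 * d) * / d) by (apply Rmult_le_pos; [lra | left; apply Rinv_0_lt_compat; lra]).
    lra.
  - apply Rmult_le_pos. nra. left. apply Rinv_0_lt_compat. nra.
Qed.

Lemma s_lip d p q : 0 < d -> Rabs (sfun d p - sfun d q) <= Rabs (p - q) / d.
Proof.
  intro Hd.
  assert (S0 : sfun d 0 = 0) by (rewrite s_pos_eq by lra; unfold Rdiv; ring).
  assert (Hpp : forall p q, 0 <= p -> 0 <= q -> Rabs (sfun d p - sfun d q) <= Rabs (p - q) / d).
  { intros p' q' Hp Hq. rewrite !s_pos_eq by lra.
    replace (p' / d - q' / d) with ((p' - q') / d) by (field; lra).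
    unfold Rdiv. rewrite Rabs_mult, Rabs_inv, (Rabs_pos_eq d) by lra. lra. }
  assert (Hnn : forall p q, p <= 0 -> q <= 0 -> Rabs (sfun d p - sfun d q) <= Rabs (p - q) / d).
  { intros p' q' Hp Hq. rewrite !s_neg_eq by lra. apply k_lip; auto. }
  assert (Hmix : forall p q, 0 <= p -> q <= 0 -> Rabs (sfun d p - sfun d q) <= Rabs (p - q) / d).
  { intros p' q' Hp Hq.
    replace (sfun d p' - sfun d q') with ((sfun d p' - sfun d 0) + (sfun d 0 - sfun d q')) by ring.
    eapply Rle_trans. apply Rabs_triang.
    pose proof (Hpp p' 0 Hp (Rle_refl 0)). pose proof (Hnn 0 q' (Rle_refl 0) Hq).
    replace (p' - 0) with p' in H by ring. replace (0 - q') with (-q') in H0 by ring.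
    rewrite (Rabs_pos_eq p') in H by lra. rewrite (Rabs_pos_eq (-q')) in H0 by lra.
    rewrite (Rabs_pos_eq (p' - q')) by lra. unfold Rdiv in *. lra. }
  destruct (Rle_or_lt 0 p); destruct (Rle_or_lt 0 q).
  - apply Hpp; lra.
  - apply Hmix; lra.
  - rewrite <- Rabs_Ropp, Ropp_minus_distr, <- (Rabs_Ropp (p - q)), Ropp_minus_distr. apply Hmix; lra.
  - apply Hnn; lra.
Qed.

Definition V1 (l1 a : R) : R := (a + exp (- a) - 1) / l1.
Definition V2 (l2 b : R) : R := l2 * (exp b - 1 - b).

Lemma V1_derive l1 a : 0 < l1 -> is_derive (V1 l1) a (phi1 l1 a).
Proof. intro. unfold V1, phi1. auto_derive. lra. field. lra. Qed.

Lemma V2_derive l2 b : is_derive (V2 l2) b (phi2 l2 b).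
Proof. unfold V2, phi2. auto_derive. auto. ring. Qed.

Lemma V1_lin l1 a : 0 < l1 -> (Rabs a - 1) / l1 <= V1 l1 a.
Proof.
  intro H. unfold V1. apply Rmult_le_compat_r. left; apply Rinv_0_lt_compat; lra.
  destruct (Rle_or_lt 0 a).
  - rewrite Rabs_pos_eq by lra. pose proof (exp_pos (-a)). lra.
  - rewrite Rabs_left by lra. pose proof (exp_ge_2y (-a)). lra.
Qed.

Lemma V2_lin l2 b : 0 < l2 -> l2 * (Rabs b - 1) <= V2 l2 b.
Proof.
  intro H. unfold V2. apply Rmult_le_compat_l. lra.
  destruct (Rle_or_lt 0 b).
  - rewrite Rabs_pos_eq by lra. pose proof (exp_ge_2y b). lra.
  - rewrite Rabs_left by lra. pose proof (exp_pos b). lra.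
Qed.

Lemma V1_nonneg l1 a : 0 < l1 -> 0 <= V1 l1 a.
Proof.
  intro. unfold V1. apply Rmult_le_pos. pose proof (exp_ineq1_le (-a)). lra.
  left; apply Rinv_0_lt_compat; lra.
Qed.

Lemma V2_nonneg l2 b : 0 < l2 -> 0 <= V2 l2 b.
Proof. intro. unfold V2. apply Rmult_le_pos. lra. pose proof (exp_ineq1_le b). lra. Qed.

Section Box.
Variables (l1 l2 R : R).
Hypotheses (Hl1 : 0 < l1) (Hl2 : 0 < l2).

Lemma V1_quad a : Rabs a <= R -> a ^ 2 / (2 * exp R * l1) <= V1 l1 a /\ V1 l1 a <= exp R * a ^ 2 / (2 * l1).
Proof.
  intro Ha. assert (Ha' : Rabs (-a) <= R) by (rewrite Rabs_Ropp; auto).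
  pose proof (exp_quad_lower R (-a) Ha'). pose proof (exp_quad_upper R (-a) Ha').
  pose proof (exp_pos R).
  unfold V1. replace ((-a)^2) with (a^2) in * by ring. split.
  - replace (a ^ 2 / (2 * exp R * l1)) with (a ^ 2 / (2 * exp R) / l1) by (field; lra).
    unfold Rdiv at 2 3. apply Rmult_le_compat_r. left; apply Rinv_0_lt_compat; lra. lra.
  - replace (exp R * a ^ 2 / (2 * l1)) with (exp R * a ^ 2 / 2 / l1) by (field; lra).
    unfold Rdiv at 1 3. apply Rmult_le_compat_r. left; apply Rinv_0_lt_compat; lra. lra.
Qed.

Lemma V2_quad b : Rabs b <= R -> l2 * b ^ 2 / (2 * exp R) <= V2 l2 b /\ V2 l2 b <= l2 * exp R * b ^ 2 / 2.
Proof.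
  intro Hb. pose proof (exp_quad_lower R b Hb). pose proof (exp_quad_upper R b Hb).
  pose proof (exp_pos R). unfold V2. split.
  - replace (l2 * b ^ 2 / (2 * exp R)) with (l2 * (b ^ 2 / (2 * exp R))) by (field; lra).
    apply Rmult_le_compat_l; lra.
  - replace (l2 * exp R * b ^ 2 / 2) with (l2 * (exp R * b ^ 2 / 2)) by (field; lra).
    apply Rmult_le_compat_l; lra.
Qed.

Lemma phi1_sign a : Rabs a <= R -> a ^ 2 / (exp R * l1) <= a * phi1 l1 a.
Proof.
  intro Ha. assert (Ha' : Rabs (-a) <= R) by (rewrite Rabs_Ropp; auto).
  pose proof (exp_m1_lower R (-a) Ha'). pose proof (exp_pos R).
  unfold phi1. replace ((-a)^2) with (a^2) in * by ring.
  replace (a * ((1 - exp (- a)) / l1)) with ((- a * (exp (- a) - 1)) / l1) by (field; lra).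
  replace (a ^ 2 / (exp R * l1)) with (a ^ 2 / exp R / l1) by (field; lra).
  unfold Rdiv at 2 3. apply Rmult_le_compat_r. left; apply Rinv_0_lt_compat; lra. lra.
Qed.

Lemma phi2_sign b : Rabs b <= R -> l2 * b ^ 2 / exp R <= b * phi2 l2 b.
Proof.
  intro Hb. pose proof (exp_m1_lower R b Hb). pose proof (exp_pos R).
  unfold phi2. replace (b * (l2 * (exp b - 1))) with (l2 * (b * (exp b - 1))) by ring.
  replace (l2 * b ^ 2 / exp R) with (l2 * (b ^ 2 / exp R)) by (field; lra).
  apply Rmult_le_compat_l; lra.
Qed.

Lemma phi2_abs b : Rabs b <= R -> Rabs (phi2 l2 b) <= l2 * exp R * Rabs b.
Proof.
  intro Hb. pose proof (exp_m1_upper R b Hb). unfold phi2.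
  rewrite Rabs_mult, (Rabs_pos_eq l2) by lra. rewrite Rmult_assoc. apply Rmult_le_compat_l; lra.
Qed.

Lemma phi1_lip a a' : Rabs a <= R -> Rabs a' <= R ->
  Rabs (phi1 l1 a - phi1 l1 a') <= exp R / l1 * Rabs (a - a').
Proof.
  intros Ha Ha'. unfold phi1.
  replace ((1 - exp (- a)) / l1 - (1 - exp (- a')) / l1) with ((exp (-a') - exp (-a)) / l1) by (field; lra).
  assert (H := exp_lip R (-a') (-a)). rewrite !Rabs_Ropp in H. specialize (H Ha' Ha).
  replace (- a' - - a) with (a - a') in H by ring.
  unfold Rdiv. rewrite Rabs_mult, Rabs_inv, (Rabs_pos_eq l1) by lra.
  replace (exp R * / l1 * Rabs (a - a')) with (exp R * Rabs (a - a') * / l1) by ring.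
  apply Rmult_le_compat_r. left; apply Rinv_0_lt_compat; lra. lra.
Qed.

Lemma phi2_lip b b' : Rabs b <= R -> Rabs b' <= R ->
  Rabs (phi2 l2 b - phi2 l2 b') <= l2 * exp R * Rabs (b - b').
Proof.
  intros Hb Hb'. unfold phi2.
  replace (l2 * (exp b - 1) - l2 * (exp b' - 1)) with (l2 * (exp b - exp b')) by ring.
  rewrite Rabs_mult, (Rabs_pos_eq l2) by lra. rewrite Rmult_assoc. apply Rmult_le_compat_l. lra.
  apply exp_lip; auto.
Qed.

Lemma phi1_bnd a : Rabs a <= R -> Rabs (phi1 l1 a) <= (1 + exp R) / l1.
Proof.
  intros Ha. unfold phi1. unfold Rdiv. rewrite Rabs_mult, Rabs_inv, (Rabs_pos_eq l1) by lra.
  apply Rmult_le_compat_r. left; apply Rinv_0_lt_compat; lra.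
  assert (exp (-a) <= exp R) by (apply exp_le_exp; apply Rabs_le_between in Ha; lra).
  pose proof (exp_pos (-a)). apply Rabs_le_between. lra.
Qed.

Lemma phi2_bnd b : Rabs b <= R -> Rabs (phi2 l2 b) <= l2 * (1 + exp R).
Proof.
  intros Hb. unfold phi2. rewrite Rabs_mult, (Rabs_pos_eq l2) by lra. apply Rmult_le_compat_l. lra.
  assert (exp b <= exp R) by (apply exp_le_exp; apply Rabs_le_between in Hb; lra).
  pose proof (exp_pos b). apply Rabs_le_between. lra.
Qed.

End Box.

Lemma phi2_gt l2 b : 0 < l2 -> - l2 < phi2 l2 b.
Proof. intro. unfold phi2. pose proof (exp_pos b). nra. Qed.

Lemma d_plus (f g : R -> R) (t a b : R) : is_derive f t a -> is_derive g t b ->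
  is_derive (fun x => f x + g x) t (a + b).
Proof. intros. exact (is_derive_plus f g t a b H H0). Qed.

Lemma d_mult (f g : R -> R) (t a b : R) : is_derive f t a -> is_derive g t b ->
  is_derive (fun x => f x * g x) t (a * g t + f t * b).
Proof. intros. exact (is_derive_mult f g t a b H H0 Rmult_comm). Qed.

Lemma d_scal (f : R -> R) (k t a : R) : is_derive f t a -> is_derive (fun x => k * f x) t (k * a).
Proof. intros. apply is_derive_scal. auto. Qed.

Lemma d_comp (f g : R -> R) (t df dg : R) : is_derive f (g t) df -> is_derive g t dg ->
  is_derive (fun x => f (g x)) t (dg * df).
Proof. intros. exact (is_derive_comp f g t df dg H H0). Qed.

Lemma d_ext (f g : R -> R) (t a b : R) : (forall x, f x = g x) -> a = b -> is_derive f t a -> is_derive g t b.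
Proof. intros H -> Hd. exact (is_derive_ext f g t b H Hd). Qed.

Lemma d_lin (c t : R) : is_derive (fun x => c * x) t c.
Proof. auto_derive; auto. ring. Qed.

Section Lims.
Context {T : Type} {F : (T -> Prop) -> Prop} {FF : Filter F}.

Lemma l_plus (f g : T -> R) a b : filterlim f F (locally a) -> filterlim g F (locally b) ->
  filterlim (fun x => f x + g x) F (locally (a + b)).
Proof.
  intros Hf Hg. eapply filterlim_comp_2; [exact Hf | exact Hg |].
  exact (@filterlim_plus R_AbsRing R_NormedModule a b).
Qed.

Lemma l_mult (f g : T -> R) a b : filterlim f F (locally a) -> filterlim g F (locally b) ->
  filterlim (fun x => f x * g x) F (locally (a * b)).
Proof.
  intros Hf Hg. eapply filterlim_comp_2; [exact Hf | exact Hg |].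
  exact (@filterlim_mult R_AbsRing a b).
Qed.

Lemma l_const (c : R) : filterlim (fun _ : T => c) F (locally c).
Proof. apply filterlim_const. Qed.

Lemma l_comp (f : T -> R) (h : R -> R) a : filterlim f F (locally a) ->
  continuous h a -> filterlim (fun x => h (f x)) F (locally (h a)).
Proof. intros Hf Hh. eapply filterlim_comp; [exact Hf | exact Hh]. Qed.
End Lims.

Lemma l_ext {T} {F : (T -> Prop) -> Prop} {FF : Filter F} (f g : T -> R) a b :
  (forall x, f x = g x) -> a = b -> filterlim f F (locally a) -> filterlim g F (locally b).
Proof. intros H -> Hf. eapply filterlim_ext; [exact H | exact Hf]. Qed.

Lemma cont_deriv (h : R -> R) a l : is_derive h a l -> continuous h a.
Proof. intros. apply (ex_derive_continuous (V:=R_NormedModule)). exists l. auto. Qed.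

Lemma l_right0 (h : R -> R) : continuous h 0 -> filterlim h (at_right 0) (locally (h 0)).
Proof. intro. eapply filterlim_filter_le_1. apply filter_le_within. exact H. Qed.

Lemma decay (w dw : R -> R) c :
  (forall t, 0 < t -> is_derive w t (dw t)) ->
  (forall t, 0 < t -> dw t <= - c * w t) ->
  filterlim w (at_right 0) (locally (w 0)) ->
  forall t, 0 <= t -> w t <= w 0 * exp (- c * t).
Proof.
  intros Hd Hi Hc t Ht.
  set (g := fun t => w t * exp (c * t)).
  assert (Hg : forall t, 0 <= t -> g t <= g 0).
  { apply (nonincr g (fun t => dw t * exp (c * t) + w t * (c * exp (c * t)))).
    - intros s Hs. unfold g. apply (d_mult w (fun x => exp (c * x))). apply Hd; auto.
      apply (d_comp exp (fun x => c * x)). apply is_derive_exp.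
      apply d_lin.
    - intros s Hs. pose proof (Hi s Hs). pose proof (exp_pos (c * s)).
      replace (dw s * exp (c * s) + w s * (c * exp (c * s))) with ((dw s + c * w s) * exp (c * s)) by ring.
      assert (dw s + c * w s <= 0) by lra. nra.
    - unfold g. apply l_mult. exact Hc.
      apply (l_right0 (fun x => exp (c * x))).
      apply (continuous_comp (fun x => c * x) exp). 
      apply (cont_deriv _ _ c). apply d_lin.
      apply continuous_exp. }
  specialize (Hg t Ht). unfold g in Hg. rewrite Rmult_0_r, exp_0, Rmult_1_r in Hg.
  replace (w t) with (w t * exp (c * t) * exp (- c * t)).
  apply Rmult_le_compat_r. left; apply exp_pos. exact Hg.
  rewrite Rmult_assoc, <- exp_plus. replace (c * t + - c * t) with 0 by ring. rewrite exp_0. ring.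
Qed.

Lemma alg_ineq (a b p1 p2 S ph ep be dl id ka k1 i1 k2 j2 A : R) :
  0 < ep -> 0 <= be -> 0 < dl -> id * dl = 1 -> 0 < ka -> ka <= 1 ->
  0 < k1 -> k1 * i1 = 1 -> 0 < k2 -> k2 * j2 = 1 ->
  ph = p1 + (1 + ep) * p2 ->
  k1 * a ^ 2 <= a * p1 -> k2 * b ^ 2 <= b * p2 -> dl * S ^ 2 <= S * ph ->
  A = i1 / 2 + (1 + ep) * j2 + be * j2 ^ 2 * id / 2 ->
  ka * A <= ep * (1 + ep) / 2 ->
  - ep * (1 + ep) * p2 ^ 2 - be * S * ph
    - ka * (a * p1 + a * p2 - (1 + ep) * b * p2 - be * S * b)
  <= - ka * k1 * a ^ 2 / 2 - ep * (1 + ep) * k2 ^ 2 * b ^ 2 / 2.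
Proof.
  intros Hep Hbe Hdl Hid Hka Hka1 Hk1 Hi1 Hk2 Hj2 Hph F1 F2 F4 HA HkA.
  assert (Hi1p : 0 < i1) by nra.
  assert (Hj2p : 0 < j2) by nra.
  assert (Hidp : 0 < id) by nra.
  assert (G0 : b ^ 2 <= j2 ^ 2 * p2 ^ 2).
  { assert (j2 * (k2 * b ^ 2) <= j2 * (b * p2)) by (apply Rmult_le_compat_l; lra).
    replace (j2 * (k2 * b ^ 2)) with ((k2 * j2) * b ^ 2) in H by ring. rewrite Hj2 in H.
    assert (0 <= (b - j2 * p2) ^ 2) by apply pow2_ge_0.
    assert ((b - j2 * p2) ^ 2 = b ^ 2 - 2 * (j2 * (b * p2)) + j2 ^ 2 * p2 ^ 2) by ring.
    lra. }
  assert (G1 : b * p2 <= j2 * p2 ^ 2).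
  { assert (0 <= k2 * (j2 * p2 - b) ^ 2) by (apply Rmult_le_pos; [lra | apply pow2_ge_0]).
    assert (k2 * (j2 * p2 - b) ^ 2 = (k2 * j2) * (j2 * p2 ^ 2) - 2 * (k2 * j2) * (b * p2) + k2 * b ^ 2) by ring.
    rewrite Hj2 in H0. lra. }
  assert (H1 : - be * S * ph <= - be * dl * S ^ 2) by nra.
  assert (H2 : - ka * (a * p1) <= - ka * k1 * a ^ 2).
  { replace (- ka * k1 * a ^ 2) with (- ka * (k1 * a ^ 2)) by ring.
    assert (ka * (k1 * a ^ 2) <= ka * (a * p1)) by (apply Rmult_le_compat_l; lra). lra. }
  assert (H3 : - a * p2 <= k1 * a ^ 2 / 2 + i1 * p2 ^ 2 / 2).
  { assert (0 <= (k1 * a + p2) ^ 2 * i1) by (apply Rmult_le_pos; [apply pow2_ge_0 | lra]).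
    assert ((k1 * a + p2) ^ 2 * i1 = k1 * (k1 * i1) * a ^ 2 + 2 * (k1 * i1) * a * p2 + i1 * p2 ^ 2) by ring.
    rewrite Hi1 in H0. nra. }
  assert (H3' : - ka * (a * p2) <= ka * (k1 * a ^ 2 / 2 + i1 * p2 ^ 2 / 2)).
  { replace (- ka * (a * p2)) with (ka * (- a * p2)) by ring. apply Rmult_le_compat_l; lra. }
  assert (H4 : ka * ((1 + ep) * b * p2) <= ka * ((1 + ep) * j2 * p2 ^ 2)).
  { replace (ka * ((1 + ep) * b * p2)) with ((ka * (1 + ep)) * (b * p2)) by ring.
    replace (ka * ((1 + ep) * j2 * p2 ^ 2)) with ((ka * (1 + ep)) * (j2 * p2 ^ 2)) by ring.
    apply Rmult_le_compat_l; nra. }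
  assert (Hbi : 0 <= be * id) by (apply Rmult_le_pos; lra).
  assert (H5 : ka * (be * S * b) <= be * dl * S ^ 2 / 2 + ka ^ 2 * be * id * b ^ 2 / 2).
  { assert (0 <= be * id * (dl * S - ka * b) ^ 2) by (apply Rmult_le_pos; [lra | apply pow2_ge_0]).
    assert (be * id * (dl * S - ka * b) ^ 2 =
            be * (id * dl) * dl * S ^ 2 - 2 * be * (id * dl) * ka * S * b + be * id * ka ^ 2 * b ^ 2) by ring.
    rewrite Hid in H0. lra. }
  assert (H6 : ka ^ 2 * be * id * b ^ 2 <= ka * be * id * j2 ^ 2 * p2 ^ 2).
  { assert (Hk : ka ^ 2 <= ka).
    { assert (ka * ka <= ka * 1) by (apply Rmult_le_compat_l; lra). simpl. lra. }
    assert (ka ^ 2 * (be * id) * b ^ 2 <= ka * (be * id) * (j2 ^ 2 * p2 ^ 2)).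
    { apply Rmult_le_compat.
      - apply Rmult_le_pos; [apply pow2_ge_0 | lra].
      - apply pow2_ge_0.
      - apply Rmult_le_compat_r; lra.
      - exact G0. }
    lra. }
  assert (H7 : k2 ^ 2 * b ^ 2 <= p2 ^ 2).
  { assert (k2 ^ 2 * b ^ 2 <= k2 ^ 2 * (j2 ^ 2 * p2 ^ 2)) by (apply Rmult_le_compat_l; [apply pow2_ge_0 | lra]).
    replace (k2 ^ 2 * (j2 ^ 2 * p2 ^ 2)) with ((k2 * j2) ^ 2 * p2 ^ 2) in H by ring.
    rewrite Hj2 in H. lra. }
  assert (HA' : ka * A = ka * i1 / 2 + ka * (1 + ep) * j2 + ka * be * j2 ^ 2 * id / 2) by (rewrite HA; field).
  assert (H8 : ep * (1 + ep) * k2 ^ 2 * b ^ 2 <= ep * (1 + ep) * p2 ^ 2).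
  { replace (ep * (1 + ep) * k2 ^ 2 * b ^ 2) with (ep * (1 + ep) * (k2 ^ 2 * b ^ 2)) by ring.
    apply Rmult_le_compat_l. apply Rmult_le_pos; lra. exact H7. }
  assert (H9 : (ka * A) * p2 ^ 2 <= ep * (1 + ep) / 2 * p2 ^ 2) by (apply Rmult_le_compat_r; [apply pow2_ge_0 | lra]).
  rewrite HA' in H9.
  assert (0 <= be * dl * S ^ 2) by (apply Rmult_le_pos; [apply Rmult_le_pos; lra | apply pow2_ge_0]).
  lra.
Qed.

Lemma d_eq (f : R -> R) (t a b : R) : is_derive f t a -> a = b -> is_derive f t b.
Proof. intros H <-; exact H. Qed.

Lemma l_eq {T} {F : (T -> Prop) -> Prop} (f : T -> R) a b :
  filterlim f F (locally a) -> a = b -> filterlim f F (locally b).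
Proof. intros H <-; exact H. Qed.

Section Model.
Variables l1 l2 us dl ep be : R.
Hypotheses (Hl1 : 0 < l1) (Hl2 : 0 < l2) (Hdl : 0 < dl) (Hep : 0 < ep) (Hbe : 0 <= be).

Definition phm a b := phi1 l1 a + (1 + ep) * phi2 l2 b.
Definition f1m a b := - (1 + ep) * phi2 l2 b - be * sfun dl (phm a b).
Definition f2m a b := phi1 l1 a - ep * phi2 l2 b - be * sfun dl (phm a b).

Lemma F1_eq eta : cl_f1 l1 l2 us dl ep be eta = f1m (fst eta) (snd eta).
Proof. destruct eta as [a b]. unfold cl_f1, u_fb, varphi, f1m, phm, sfun. simpl. field.
  apply Rgt_not_eq. apply Rlt_le_trans with dl; auto. apply sq_ge; auto. Qed.

Lemma F2_eq eta : cl_f2 l1 l2 us dl ep be eta = f2m (fst eta) (snd eta).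
Proof. destruct eta as [a b]. unfold cl_f2, u_fb, varphi, f2m, phm, sfun. simpl. field.
  apply Rgt_not_eq. apply Rlt_le_trans with dl; auto. apply sq_ge; auto. Qed.

Lemma u_pos eta : ep * l2 + be < us -> 0 < u_fb l1 l2 us dl ep be eta.
Proof.
  intro H. destruct eta as [a b]. unfold u_fb. change (snd (a, b)) with b.
  set (v := varphi l1 l2 ep (a, b)) in *.
  pose proof (phi2_gt l2 b Hl2).
  pose proof (s_gt_m1 dl v Hdl). unfold sfun in H1.
  assert (ep * (- l2) < ep * phi2 l2 b) by (apply Rmult_lt_compat_l; lra).
  assert (be * (-1) <= be * (v / sqrt (dl ^ 2 + Rmin 0 v ^ 2))) by (apply Rmult_le_compat_l; lra).
  unfold Rdiv in *. rewrite Rmult_assoc. lra.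
Qed.

Definition Wk ka a b := V1 l1 a + (1 + ep) * V2 l2 b + (- ka) * (a * b + (- 1 / 2) * (a * a)).
Definition DW ka a b dA dB := phi1 l1 a * dA + (1 + ep) * (phi2 l2 b * dB) - ka * (dA * b + a * dB - a * dA).

Lemma W_deriv (A B : R -> R) (t dA dB ka : R) : is_derive A t dA -> is_derive B t dB ->
  is_derive (fun t => Wk ka (A t) (B t)) t (DW ka (A t) (B t) dA dB).
Proof.
  intros HA HB. unfold Wk, DW. eapply d_eq.
  - apply d_plus. apply d_plus.
    apply (d_comp (V1 l1) A). apply V1_derive; auto. exact HA.
    apply d_scal. apply (d_comp (V2 l2) B). apply V2_derive. exact HB.
    apply d_scal. apply d_plus. apply (d_mult A B). exact HA. exact HB. apply d_scal. apply (d_mult A A). exact HA. exact HA.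
  - field.
Qed.

Lemma W_lim {T} {F : (T -> Prop) -> Prop} {FF : Filter F} (A B : T -> R) a b ka :
  filterlim A F (locally a) -> filterlim B F (locally b) ->
  filterlim (fun t => Wk ka (A t) (B t)) F (locally (Wk ka a b)).
Proof.
  intros HA HB. unfold Wk.
  apply l_plus. apply l_plus.
  apply (l_comp A (V1 l1)). auto. apply (cont_deriv _ _ (phi1 l1 a)). apply V1_derive; auto.
  apply l_mult. apply l_const. apply (l_comp B (V2 l2)). auto. apply (cont_deriv _ _ (phi2 l2 b)). apply V2_derive.
  apply l_mult. apply l_const. apply l_plus. apply l_mult; auto. apply l_mult. apply l_const. apply l_mult; auto.
Qed.

Lemma DW0_eq a b : DW 0 a b (f1m a b) (f2m a b) =
  - (ep * (1 + ep) * phi2 l2 b ^ 2) - be * (sfun dl (phm a b) * phm a b).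
Proof. unfold DW, f1m, f2m, phm. ring. Qed.

Lemma DW0 a b : DW 0 a b (f1m a b) (f2m a b) <= 0.
Proof.
  rewrite DW0_eq.
  pose proof (s_phi_pos dl (phm a b) Hdl).
  assert (0 <= be * (sfun dl (phm a b) * phm a b)) by (apply Rmult_le_pos; lra).
  assert (0 <= ep * (1 + ep) * phi2 l2 b ^ 2) by (apply Rmult_le_pos; [apply Rmult_le_pos; lra | apply pow2_ge_0]).
  lra.
Qed.

End Model.

Lemma inv_le_sum x y : 0 < x -> 0 < y -> / (x + y) <= / x.
Proof. intros. apply Rinv_le_contravar; lra. Qed.

Lemma DW_eq l1 l2 dl ep be ka a b :
  DW l1 l2 ep ka a b (f1m l1 l2 dl ep be a b) (f2m l1 l2 dl ep be a b) =
  - ep * (1 + ep) * phi2 l2 b ^ 2 - be * sfun dl (phm l1 l2 ep a b) * phm l1 l2 ep a b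
  - ka * (a * phi1 l1 a + a * phi2 l2 b - (1 + ep) * b * phi2 l2 b - be * sfun dl (phm l1 l2 ep a b) * b).
Proof. unfold DW, f1m, f2m, phm. ring. Qed.

Section Box2.
Variables l1 l2 dl ep be : R.
Hypotheses (Hl1 : 0 < l1) (Hl2 : 0 < l2) (Hdl : 0 < dl) (Hep : 0 < ep) (Hbe : 0 <= be).

Lemma box_point R : 0 < R -> exists ka m Mx c1, 0 < ka /\ 0 < m /\ 0 < Mx /\ 0 < c1 /\
  forall a b, Rabs a <= R -> Rabs b <= R ->
    m * (a ^ 2 + b ^ 2) <= Wk l1 l2 ep ka a b /\
    Wk l1 l2 ep ka a b <= Mx * (a ^ 2 + b ^ 2) /\
    DW l1 l2 ep ka a b (f1m l1 l2 dl ep be a b) (f2m l1 l2 dl ep be a b) <= - c1 * (a ^ 2 + b ^ 2).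
Proof.
  intro HR. set (E := exp R). assert (HE : 1 <= E) by (apply expR_ge1; lra).
  set (k1 := / (E * l1)). set (i1 := E * l1). set (k2 := l2 / E). set (j2 := E / l2).
  set (id := / dl).
  set (A := i1 / 2 + (1 + ep) * j2 + be * j2 ^ 2 * id / 2).
  assert (Hk1 : 0 < k1) by (apply Rinv_0_lt_compat; nra).
  assert (Hi1 : 0 < i1) by (unfold i1; nra).
  assert (Hk2 : 0 < k2) by (unfold k2; apply Rdiv_lt_0_compat; lra).
  assert (Hj2 : 0 < j2) by (unfold j2; apply Rdiv_lt_0_compat; lra).
  assert (Hid : 0 < id) by (apply Rinv_0_lt_compat; lra).
  assert (HA : 0 < A).
  { unfold A. assert (0 <= be * j2 ^ 2 * id / 2).
    { apply Rdiv_le_0_compat; [|lra]. apply Rmult_le_pos; [apply Rmult_le_pos; [lra | apply pow2_ge_0] | lra]. }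
    assert (0 < (1 + ep) * j2) by nra. lra. }
  set (m := / (2 * E * l1 + 2 * E / ((1 + ep) * l2))).
  assert (Hm1p : 0 < 2 * E * l1) by nra.
  assert (Hm2p : 0 < 2 * E / ((1 + ep) * l2)) by (apply Rdiv_lt_0_compat; nra).
  assert (Hm : 0 < m) by (apply Rinv_0_lt_compat; lra).
  assert (Hm1 : m <= / (2 * E * l1)) by (apply inv_le_sum; lra).
  assert (Hm2 : m <= (1 + ep) * l2 / (2 * E)).
  { replace ((1 + ep) * l2 / (2 * E)) with (/ (2 * E / ((1 + ep) * l2))) by (field; nra).
    unfold m. rewrite Rplus_comm. apply inv_le_sum; lra. }
  set (X1 := 1). set (X2 := 2 / m). set (X3 := 2 * A / (ep * (1 + ep))).
  assert (HX2 : 0 < X2) by (apply Rdiv_lt_0_compat; lra).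
  assert (HX3 : 0 < X3) by (apply Rdiv_lt_0_compat; nra).
  set (ka := / (X1 + X2 + X3)).
  assert (Hka : 0 < ka) by (apply Rinv_0_lt_compat; unfold X1; lra).
  assert (Hka1 : ka <= 1).
  { replace 1 with (/ X1) by (unfold X1; field). unfold ka. rewrite Rplus_assoc. apply inv_le_sum; unfold X1; lra. }
  assert (Hka2 : ka <= m / 2).
  { replace (m / 2) with (/ X2) by (unfold X2; field; lra). unfold ka.
    replace (X1 + X2 + X3) with (X2 + (X1 + X3)) by ring. apply inv_le_sum; unfold X1; lra. }
  assert (Hka3 : ka * A <= ep * (1 + ep) / 2).
  { assert (ka <= / X3).
    { unfold ka. replace (X1 + X2 + X3) with (X3 + (X1 + X2)) by ring. apply inv_le_sum; unfold X1; lra. }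
    replace (ep * (1 + ep) / 2) with (/ X3 * A) by (unfold X3; field; nra).
    apply Rmult_le_compat_r; lra. }
  set (Mx := E / (2 * l1) + (1 + ep) * l2 * E / 2 + ka).
  assert (HMx : 0 < Mx).
  { unfold Mx. assert (0 < E / (2 * l1)) by (apply Rdiv_lt_0_compat; lra).
    assert (0 < (1 + ep) * l2 * E / 2) by (apply Rdiv_lt_0_compat; [repeat apply Rmult_lt_0_compat; lra | lra]). lra. }
  set (Y1 := 2 / (ka * k1)). set (Y2 := 2 / (ep * (1 + ep) * k2 ^ 2)).
  assert (HY1 : 0 < Y1) by (apply Rdiv_lt_0_compat; nra).
  assert (HY2 : 0 < Y2) by (apply Rdiv_lt_0_compat; [lra | apply Rmult_lt_0_compat; [nra | apply pow_lt; lra]]).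
  set (c1 := / (Y1 + Y2)).
  assert (Hc1 : 0 < c1) by (apply Rinv_0_lt_compat; lra).
  assert (Hc11 : c1 <= ka * k1 / 2).
  { replace (ka * k1 / 2) with (/ Y1) by (unfold Y1; field; nra). apply inv_le_sum; lra. }
  assert (Hc12 : c1 <= ep * (1 + ep) * k2 ^ 2 / 2).
  { replace (ep * (1 + ep) * k2 ^ 2 / 2) with (/ Y2) by (unfold Y2; field; split; [nra | lra]).
    unfold c1. rewrite Rplus_comm. apply inv_le_sum; lra. }
  exists ka, (m / 2), Mx, c1. split; [lra|]. split; [lra|]. split; [lra|]. split; [lra|].
  intros a b Ha Hb.
  destruct (V1_quad l1 R Hl1 a Ha) as [Va1 Va2]. fold E in Va1, Va2.
  destruct (V2_quad l2 R Hl2 b Hb) as [Vb1 Vb2]. fold E in Vb1, Vb2.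
  assert (Hab : Rabs (a * b) <= (a ^ 2 + b ^ 2) / 2).
  { rewrite Rabs_mult. pose proof (pow2_ge_0 (Rabs a - Rabs b)).
    assert (Rabs a ^ 2 = a ^ 2) by apply pow2_abs.
    assert (Rabs b ^ 2 = b ^ 2) by apply pow2_abs.
    assert ((Rabs a - Rabs b) ^ 2 = Rabs a ^ 2 + Rabs b ^ 2 - 2 * (Rabs a * Rabs b)) by ring.
    lra. }
  assert (Hab1 := Rle_abs (a * b)). assert (Hab2 : - (a * b) <= Rabs (a * b)) by (rewrite <- Rabs_Ropp; apply Rle_abs).
  assert (Ha2 := pow2_ge_0 a). assert (Hb2 := pow2_ge_0 b).
  assert (HW : Wk l1 l2 ep ka a b = V1 l1 a + (1 + ep) * V2 l2 b - ka * (a * b) + ka * (a ^ 2 / 2)) by (unfold Wk; field).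
  assert (HV1l : m * a ^ 2 <= V1 l1 a).
  { eapply Rle_trans; [| exact Va1].
    replace (a ^ 2 / (2 * E * l1)) with (/ (2 * E * l1) * a ^ 2) by (field; nra).
    apply Rmult_le_compat_r; lra. }
  assert (HV2l : m * b ^ 2 <= (1 + ep) * V2 l2 b).
  { assert ((1 + ep) * (l2 * b ^ 2 / (2 * E)) <= (1 + ep) * V2 l2 b) by (apply Rmult_le_compat_l; lra).
    eapply Rle_trans; [| exact H].
    replace ((1 + ep) * (l2 * b ^ 2 / (2 * E))) with ((1 + ep) * l2 / (2 * E) * b ^ 2) by (field; lra).
    apply Rmult_le_compat_r; lra. }
  assert (HV1u : V1 l1 a <= E / (2 * l1) * a ^ 2).
  { replace (E / (2 * l1) * a ^ 2) with (E * a ^ 2 / (2 * l1)) by (field; lra). exact Va2. }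
  assert (HV2u : (1 + ep) * V2 l2 b <= (1 + ep) * l2 * E / 2 * b ^ 2).
  { replace ((1 + ep) * l2 * E / 2 * b ^ 2) with ((1 + ep) * (l2 * E * b ^ 2 / 2)) by field.
    apply Rmult_le_compat_l; lra. }
  assert (Hkab : ka * Rabs (a * b) <= ka * ((a ^ 2 + b ^ 2) / 2)) by (apply Rmult_le_compat_l; lra).
  assert (Hkab1 : - (ka * (a * b)) <= ka * Rabs (a * b)) by (rewrite Ropp_mult_distr_r; apply Rmult_le_compat_l; lra).
  assert (Hkab2 : ka * (a * b) <= ka * Rabs (a * b)) by (apply Rmult_le_compat_l; lra).
  assert (Hka_a : ka * a ^ 2 <= m / 2 * a ^ 2) by (apply Rmult_le_compat_r; lra).
  assert (Hka_b : ka * b ^ 2 <= m / 2 * b ^ 2) by (apply Rmult_le_compat_r; lra).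
  assert (Hka_a0 : 0 <= ka * a ^ 2) by (apply Rmult_le_pos; lra).
  assert (Hka_b0 : 0 <= ka * b ^ 2) by (apply Rmult_le_pos; lra).
  split; [| split].
  - rewrite HW. lra.
  - rewrite HW. unfold Mx.
    assert (0 <= E / (2 * l1) * b ^ 2) by (apply Rmult_le_pos; [apply Rdiv_le_0_compat; lra | lra]).
    assert (0 <= (1 + ep) * l2 * E / 2 * a ^ 2) by (apply Rmult_le_pos; [apply Rdiv_le_0_compat; [repeat apply Rmult_le_pos; lra | lra] | lra]).
    lra.
  - rewrite DW_eq.
    eapply Rle_trans.
    + apply (alg_ineq a b (phi1 l1 a) (phi2 l2 b) (sfun dl (phm l1 l2 ep a b)) (phm l1 l2 ep a b)
               ep be dl id ka k1 i1 k2 j2 A); auto.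
      * unfold id. field. lra.
      * unfold k1, i1. field. nra.
      * unfold k2, j2. field. lra.
      * pose proof (phi1_sign l1 R Hl1 a Ha). fold E in H.
        replace (k1 * a ^ 2) with (a ^ 2 / (E * l1)) by (unfold k1; field; nra). exact H.
      * pose proof (phi2_sign l2 R Hl2 b Hb). fold E in H.
        replace (k2 * b ^ 2) with (l2 * b ^ 2 / E) by (unfold k2; field; lra). exact H.
      * apply s_phi; auto.
    + assert (c1 * a ^ 2 <= ka * k1 / 2 * a ^ 2) by (apply Rmult_le_compat_r; lra).
      assert (c1 * b ^ 2 <= ep * (1 + ep) * k2 ^ 2 / 2 * b ^ 2) by (apply Rmult_le_compat_r; lra).
      assert (E1 : - ka * k1 * a ^ 2 / 2 = - (ka * k1 / 2 * a ^ 2)) by field.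
      assert (E2 : - ep * (1 + ep) * k2 ^ 2 * b ^ 2 / 2 = - (ep * (1 + ep) * k2 ^ 2 / 2 * b ^ 2)) by field.
      lra.
Qed.

End Box2.

Section Sol.
Variables l1 l2 us dl ep be : R.
Hypotheses (Hl1 : 0 < l1) (Hl2 : 0 < l2) (Hdl : 0 < dl) (Hep : 0 < ep) (Hbe : 0 <= be).

Lemma sol_W x ka : is_solution (cl_f1 l1 l2 us dl ep be) (cl_f2 l1 l2 us dl ep be) x ->
  (forall t, 0 < t -> is_derive (fun t => Wk l1 l2 ep ka (fst (x t)) (snd (x t))) t
     (DW l1 l2 ep ka (fst (x t)) (snd (x t)) (f1m l1 l2 dl ep be (fst (x t)) (snd (x t))) (f2m l1 l2 dl ep be (fst (x t)) (snd (x t))))) /\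
  filterlim (fun t => Wk l1 l2 ep ka (fst (x t)) (snd (x t))) (at_right 0) (locally (Wk l1 l2 ep ka (fst (x 0)) (snd (x 0)))).
Proof.
  intros [H1 [H2 H3]]. split.
  - intros t Ht. destruct (H3 t Ht) as [D1 D2].
    rewrite (F1_eq l1 l2 us dl ep be Hdl) in D1. rewrite (F2_eq l1 l2 us dl ep be Hdl) in D2.
    apply W_deriv; auto.
  - apply W_lim; auto. exact (@filter_filter _ _ (at_right_proper_filter 0)).
Qed.

Lemma V_nonincr x : is_solution (cl_f1 l1 l2 us dl ep be) (cl_f2 l1 l2 us dl ep be) x ->
  forall t, 0 <= t -> Wk l1 l2 ep 0 (fst (x t)) (snd (x t)) <= Wk l1 l2 ep 0 (fst (x 0)) (snd (x 0)).
Proof.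
  intros Hx. destruct (sol_W x 0 Hx) as [Hd Hc].
  apply (nonincr (fun t => Wk l1 l2 ep 0 (fst (x t)) (snd (x t))) _ Hd).
  - intros t _. apply DW0; auto.
  - exact Hc.
Qed.

Lemma V_box v a b : Wk l1 l2 ep 0 a b <= v -> Rabs a <= 1 + l1 * v /\ Rabs b <= 1 + v / l2.
Proof.
  intro H. unfold Wk in H.
  pose proof (V1_lin l1 a Hl1). pose proof (V2_lin l2 b Hl2).
  pose proof (V1_nonneg l1 a Hl1). pose proof (V2_nonneg l2 b Hl2).
  assert (V2 l2 b <= (1 + ep) * V2 l2 b) by nra.
  assert (HV : V1 l1 a + (1 + ep) * V2 l2 b <= v) by lra.
  split.
  - assert ((Rabs a - 1) / l1 <= v) by lra.
    apply Rmult_le_compat_l with (r := l1) in H5; [|lra].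
    replace (l1 * ((Rabs a - 1) / l1)) with (Rabs a - 1) in H5 by (field; lra). lra.
  - assert (l2 * (Rabs b - 1) <= v) by lra.
    assert (Rabs b - 1 <= v / l2).
    { apply Rmult_le_reg_l with l2. lra. replace (l2 * (v / l2)) with v by (field; lra). lra. }
    lra.
Qed.

Lemma box_decay R : 0 < R -> exists K c, 0 < K /\ 0 < c /\
  forall x, is_solution (cl_f1 l1 l2 us dl ep be) (cl_f2 l1 l2 us dl ep be) x ->
  (forall t, 0 <= t -> Rabs (fst (x t)) <= R /\ Rabs (snd (x t)) <= R) ->
  forall t, 0 <= t -> norm2 (x t) <= K * exp (- c * t) * norm2 (x 0).
Proof.
  intro HR. destruct (box_point l1 l2 dl ep be Hl1 Hl2 Hdl Hep Hbe R HR) as [ka [m [Mx [c1 [Hka [Hm [HMx [Hc1 Hp]]]]]]]].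
  exists (sqrt (Mx / m)), (c1 / Mx / 2). split; [apply sqrt_lt_R0; apply Rdiv_lt_0_compat; lra|].
  split; [apply Rdiv_lt_0_compat; [apply Rdiv_lt_0_compat|]; lra|].
  intros x Hx Hb t Ht.
  destruct (sol_W x ka Hx) as [Hd Hc].
  set (w := fun t => Wk l1 l2 ep ka (fst (x t)) (snd (x t))).
  assert (Hdec := decay w _ (c1 / Mx) Hd).
  assert (Hdec' : forall t, 0 <= t -> w t <= w 0 * exp (- (c1 / Mx) * t)).
  { apply Hdec; [|exact Hc]. intros s Hs.
    destruct (Hb s (Rlt_le _ _ Hs)) as [Ha1 Hb1].
    destruct (Hp _ _ Ha1 Hb1) as [P1 [P2 P3]].
    unfold w. set (N := fst (x s) ^ 2 + snd (x s) ^ 2) in *.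
    assert (c1 / Mx * Wk l1 l2 ep ka (fst (x s)) (snd (x s)) <= c1 / Mx * (Mx * N)).
    { apply Rmult_le_compat_l. left; apply Rdiv_lt_0_compat; lra. exact P2. }
    replace (c1 / Mx * (Mx * N)) with (c1 * N) in H by (field; lra).
    lra. }
  destruct (Hb t Ht) as [Ha1 Hb1]. destruct (Hp _ _ Ha1 Hb1) as [P1 [P2 P3]].
  destruct (Hb 0 (Rle_refl 0)) as [Ha0 Hb0]. destruct (Hp _ _ Ha0 Hb0) as [Q1 [Q2 Q3]].
  specialize (Hdec' t Ht). unfold w in Hdec'.
  set (Nt := fst (x t) ^ 2 + snd (x t) ^ 2) in *.
  set (N0 := fst (x 0) ^ 2 + snd (x 0) ^ 2) in *.
  set (ee := exp (- (c1 / Mx) * t)) in *.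
  assert (Hee : 0 < ee) by apply exp_pos.
  assert (HN0 : 0 <= N0) by (unfold N0; pose proof (pow2_ge_0 (fst (x 0))); pose proof (pow2_ge_0 (snd (x 0))); lra).
  assert (m * Nt <= Mx * N0 * ee).
  { eapply Rle_trans. exact P1. eapply Rle_trans. exact Hdec'. apply Rmult_le_compat_r; lra. }
  assert (HNt : Nt <= Mx / m * ee * N0).
  { apply Rmult_le_reg_l with m. lra. replace (m * (Mx / m * ee * N0)) with (Mx * N0 * ee) by (field; lra). lra. }
  unfold norm2. fold Nt N0.
  replace (exp (- (c1 / Mx / 2) * t)) with (sqrt ee).
  - rewrite <- !sqrt_mult_alt.
    + apply sqrt_le_1_alt. exact HNt.
    + apply Rmult_le_pos. left; apply Rdiv_lt_0_compat; lra. lra.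
    + left; apply Rdiv_lt_0_compat; lra.
  - unfold ee. replace (- (c1 / Mx) * t) with ((- (c1 / Mx / 2) * t) + (- (c1 / Mx / 2) * t)) by (field; lra).
    rewrite exp_plus. apply sqrt_square. left; apply exp_pos.
Qed.

End Sol.

Lemma abs_fst_le p : Rabs (fst p) <= norm2 p.
Proof.
  unfold norm2. rewrite <- (sqrt_pow2 (Rabs (fst p))) by apply Rabs_pos. apply sqrt_le_1_alt.
  rewrite pow2_abs. pose proof (pow2_ge_0 (snd p)). lra.
Qed.

Lemma abs_snd_le p : Rabs (snd p) <= norm2 p.
Proof.
  unfold norm2. rewrite <- (sqrt_pow2 (Rabs (snd p))) by apply Rabs_pos. apply sqrt_le_1_alt.
  rewrite pow2_abs. pose proof (pow2_ge_0 (fst p)). lra.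
Qed.

Lemma norm2_pos p : 0 <= norm2 p.
Proof. apply sqrt_pos. Qed.

Section Main.
Variables l1 l2 us dl ep be : R.
Hypotheses (Hl1 : 0 < l1) (Hl2 : 0 < l2) (Hdl : 0 < dl) (Hep : 0 < ep) (Hbe : 0 <= be).

Let F1 := cl_f1 l1 l2 us dl ep be.
Let F2 := cl_f2 l1 l2 us dl ep be.

Lemma sol_bounded x : is_solution F1 F2 x -> forall v, Wk l1 l2 ep 0 (fst (x 0)) (snd (x 0)) <= v ->
  forall t, 0 <= t -> Rabs (fst (x t)) <= 1 + l1 * v + v / l2 /\ Rabs (snd (x t)) <= 1 + l1 * v + v / l2.
Proof.
  intros Hx v Hv t Ht. pose proof (V_nonincr l1 l2 us dl ep be Hl1 Hdl Hep Hbe x Hx t Ht).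
  assert (Hw : 0 <= Wk l1 l2 ep 0 (fst (x t)) (snd (x t))).
  { unfold Wk. pose proof (V1_nonneg l1 (fst (x t)) Hl1). pose proof (V2_nonneg l2 (snd (x t)) Hl2).
    assert (0 <= (1 + ep) * V2 l2 (snd (x t))) by (apply Rmult_le_pos; lra). lra. }
  assert (Hv0 : 0 <= v) by lra.
  assert (0 <= l1 * v) by (apply Rmult_le_pos; lra).
  assert (0 <= v / l2) by (apply Rdiv_le_0_compat; lra).
  destruct (V_box l1 l2 ep Hl1 Hl2 Hep v (fst (x t)) (snd (x t))) as [B1 B2]. lra.
  lra.
Qed.

Lemma les : LES F1 F2.
Proof.
  set (v1 := exp 1 / (2 * l1) + (1 + ep) * (l2 * exp 1 / 2)).
  assert (Hv1 : 0 < v1).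
  { unfold v1. pose proof (exp_pos 1). assert (0 < exp 1 / (2 * l1)) by (apply Rdiv_lt_0_compat; lra).
    assert (0 < l2 * exp 1 / 2) by (apply Rdiv_lt_0_compat; [apply Rmult_lt_0_compat|]; lra).
    assert (0 < (1 + ep) * (l2 * exp 1 / 2)) by (apply Rmult_lt_0_compat; lra). lra. }
  set (R := 1 + l1 * v1 + v1 / l2).
  assert (HR : 0 < R).
  { unfold R. assert (0 < l1 * v1) by (apply Rmult_lt_0_compat; lra).
    assert (0 < v1 / l2) by (apply Rdiv_lt_0_compat; lra). lra. }
  destruct (box_decay l1 l2 us dl ep be Hl1 Hl2 Hdl Hep Hbe R HR) as [K [c [HK [Hc Hd]]]].
  exists 1, K, c. split; [lra|]. split; [auto|]. split; [auto|].
  intros x Hx Hn t Ht. apply Hd; auto.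
  intros s Hs. apply sol_bounded; auto.
  pose proof (abs_fst_le (x 0)). pose proof (abs_snd_le (x 0)).
  assert (Ha : Rabs (fst (x 0)) <= 1) by lra. assert (Hb : Rabs (snd (x 0)) <= 1) by lra.
  destruct (V1_quad l1 1 Hl1 _ Ha) as [_ U1]. destruct (V2_quad l2 1 Hl2 _ Hb) as [_ U2].
  assert (A2 : fst (x 0) ^ 2 <= 1) by (rewrite <- pow2_abs; pose proof (Rabs_pos (fst (x 0))); simpl; nra).
  assert (B2 : snd (x 0) ^ 2 <= 1) by (rewrite <- pow2_abs; pose proof (Rabs_pos (snd (x 0))); simpl; nra).
  pose proof (exp_pos 1).
  assert (exp 1 * fst (x 0) ^ 2 / (2 * l1) <= exp 1 / (2 * l1)).
  { unfold Rdiv. apply Rmult_le_compat_r. left; apply Rinv_0_lt_compat; lra. nra. }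
  assert (l2 * exp 1 * snd (x 0) ^ 2 / 2 <= l2 * exp 1 / 2).
  { unfold Rdiv. apply Rmult_le_compat_r. lra. assert (0 < l2 * exp 1) by nra. nra. }
  assert ((1 + ep) * V2 l2 (snd (x 0)) <= (1 + ep) * (l2 * exp 1 / 2)) by (apply Rmult_le_compat_l; lra).
  unfold Wk, v1. lra.
Qed.

Lemma stable : lyap_stable F1 F2.
Proof.
  destruct les as [r [k [c [Hr [Hk [Hc H]]]]]].
  intros e He. exists (Rmin r (e / k)). split.
  { apply Rmin_pos; auto. apply Rdiv_lt_0_compat; auto. }
  intros x Hx Hn t Ht.
  assert (Hn1 : norm2 (x 0) < r) by (eapply Rlt_le_trans; [exact Hn | apply Rmin_l]).
  assert (Hn2 : norm2 (x 0) < e / k) by (eapply Rlt_le_trans; [exact Hn | apply Rmin_r]).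
  pose proof (H x Hx Hn1 t Ht).
  assert (exp (- c * t) <= 1) by (rewrite <- exp_0; apply exp_le_exp; nra).
  pose proof (norm2_pos (x 0)). pose proof (exp_pos (- c * t)).
  assert (k * exp (- c * t) * norm2 (x 0) <= k * norm2 (x 0)).
  { rewrite Rmult_assoc. apply Rmult_le_compat_l. lra.
    replace (norm2 (x 0)) with (1 * norm2 (x 0)) at 2 by ring. apply Rmult_le_compat_r; lra. }
  assert (k * norm2 (x 0) < e).
  { replace e with (k * (e / k)) by (field; lra). apply Rmult_lt_compat_l; lra. }
  lra.
Qed.

Lemma attractive : glob_attractive F1 F2.
Proof.
  intros x Hx.
  set (v := Wk l1 l2 ep 0 (fst (x 0)) (snd (x 0))).
  assert (Hv : 0 <= v).
  { unfold v, Wk. pose proof (V1_nonneg l1 (fst (x 0)) Hl1). pose proof (V2_nonneg l2 (snd (x 0)) Hl2).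
    assert (0 <= (1 + ep) * V2 l2 (snd (x 0))) by (apply Rmult_le_pos; lra). lra. }
  set (R := 1 + l1 * v + v / l2).
  assert (HR : 0 < R).
  { unfold R. assert (0 <= l1 * v) by (apply Rmult_le_pos; lra).
    assert (0 <= v / l2) by (apply Rdiv_le_0_compat; lra). lra. }
  destruct (box_decay l1 l2 us dl ep be Hl1 Hl2 Hdl Hep Hbe R HR) as [K [c [HK [Hc Hd]]]].
  assert (Hb : forall t, 0 <= t -> norm2 (x t) <= K * exp (- c * t) * norm2 (x 0)).
  { apply Hd; auto. apply sol_bounded; auto. unfold v; lra. }
  apply is_lim_spec. intro eps. simpl.
  set (C := K * norm2 (x 0) + 1).
  assert (HC : 0 < C) by (unfold C; pose proof (norm2_pos (x 0)); assert (0 <= K * norm2 (x 0)) by (apply Rmult_le_pos; lra); lra).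
  exists (Rmax 0 (- ln (eps / C) / c)). intros t Ht.
  assert (Ht0 : 0 <= t) by (eapply Rle_trans; [apply Rmax_l | left; exact Ht]).
  assert (Ht1 : - ln (eps / C) / c < t) by (eapply Rle_lt_trans; [apply Rmax_r | exact Ht]).
  assert (He : exp (- c * t) < eps / C).
  { rewrite <- (exp_ln (eps / C)) by (apply Rdiv_lt_0_compat; [apply cond_pos | lra]).
    apply exp_increasing.
    apply Rmult_lt_compat_l with (r := c) in Ht1; auto.
    replace (c * (- ln (eps / C) / c)) with (- ln (eps / C)) in Ht1 by (field; lra). lra. }
  pose proof (Hb t Ht0). pose proof (norm2_pos (x t)). pose proof (norm2_pos (x 0)).
  rewrite Rminus_0_r, Rabs_pos_eq by lra.
  pose proof (exp_pos (- c * t)).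
  assert (K * exp (- c * t) * norm2 (x 0) <= exp (- c * t) * (C - 1)).
  { unfold C. replace (exp (- c * t) * (K * norm2 (x 0) + 1 - 1)) with (K * exp (- c * t) * norm2 (x 0)) by ring. lra. }
  assert (exp (- c * t) * C < eps).
  { replace (pos eps) with (eps / C * C) by (field; lra). apply Rmult_lt_compat_r; lra. }
  lra.
Qed.

Lemma equil1 : F1 (0, 0) = 0.
Proof.
  unfold F1. rewrite (F1_eq l1 l2 us dl ep be Hdl). simpl. unfold f1m, phm, phi1, phi2.
  rewrite Ropp_0, exp_0. replace (l2 * (1 - 1)) with 0 by ring. replace ((1 - 1) / l1) with 0 by (field; lra).
  replace (0 + (1 + ep) * 0) with 0 by ring. rewrite (s_pos_eq dl 0 Hdl) by lra. field. lra.
Qed.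

Lemma equil2 : F2 (0, 0) = 0.
Proof.
  unfold F2. rewrite (F2_eq l1 l2 us dl ep be Hdl). simpl. unfold f2m, phm, phi1, phi2.
  rewrite Ropp_0, exp_0. replace (l2 * (1 - 1)) with 0 by ring. replace ((1 - 1) / l1) with 0 by (field; lra).
  replace (0 + (1 + ep) * 0) with 0 by ring. rewrite (s_pos_eq dl 0 Hdl) by lra. field. lra.
Qed.

End Main.

Lemma lip_cont (f : R -> R) K : (forall t s, Rabs (f t - f s) <= K * Rabs (t - s)) ->
  forall t, continuous f t.
Proof.
  intros H t. apply continuity_pt_filterlim.
  unfold continuity_pt, continue_in, limit1_in, limit_in. intros eps He.
  exists (eps / (Rabs K + 1)). split. apply Rdiv_lt_0_compat; [lra | pose proof (Rabs_pos K); lra].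
  intros x [_ Hx]. simpl in *. unfold R_dist in *.
  pose proof (Rabs_pos K). pose proof (Rabs_pos (x - t)).
  eapply Rle_lt_trans. apply H.
  assert (K * Rabs (x - t) <= Rabs K * Rabs (x - t)) by (apply Rmult_le_compat_r; [lra | apply Rle_abs]).
  assert (Rabs K * Rabs (x - t) <= Rabs K * (eps / (Rabs K + 1))) by (apply Rmult_le_compat_l; lra).
  assert (Rabs K * (eps / (Rabs K + 1)) < eps).
  { apply Rmult_lt_reg_r with (Rabs K + 1). lra.
    replace (Rabs K * (eps / (Rabs K + 1)) * (Rabs K + 1)) with (Rabs K * eps) by (field; lra). nra. }
  lra.
Qed.

Lemma ex_RInt_lip (f : R -> R) K a b : (forall t s, Rabs (f t - f s) <= K * Rabs (t - s)) -> ex_RInt f a b.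
Proof. intros H. apply (ex_RInt_continuous (V:=R_CompleteNormedModule)). intros z _. eapply lip_cont; eauto. Qed.

Lemma RInt_diff (f : R -> R) a b c : ex_RInt f a c -> ex_RInt f c b ->
  RInt f a b - RInt f a c = RInt f c b.
Proof.
  intros H1 H2. rewrite <- (RInt_Chasles f a c b H1 H2). unfold plus. simpl. ring.
Qed.

Lemma abs_RInt_const (f : R -> R) a b M : ex_RInt f a b ->
  (forall x, Rmin a b <= x <= Rmax a b -> Rabs (f x) <= M) -> Rabs (RInt f a b) <= M * Rabs (b - a).
Proof.
  intros He H. destruct (Rle_or_lt a b) as [Hab|Hab].
  - rewrite (Rabs_pos_eq (b - a)) by lra. rewrite Rmult_comm. apply abs_RInt_le_const; auto.
    intros t Ht. apply H. rewrite Rmin_left, Rmax_right; lra.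
  - rewrite <- opp_RInt_swap by (apply ex_RInt_swap; auto). unfold opp. simpl. rewrite Rabs_Ropp.
    rewrite (Rabs_left (b - a)) by lra. replace (- (b - a)) with (a - b) by ring. rewrite Rmult_comm.
    apply abs_RInt_le_const; [lra | apply ex_RInt_swap; auto |].
    intros t Ht. apply H. rewrite Rmin_right, Rmax_left; lra.
Qed.

Lemma RInt_abs_bound (f g : R -> R) a b : a <= b -> ex_RInt f a b -> ex_RInt g a b ->
  (forall x, a <= x <= b -> Rabs (f x) <= g x) -> Rabs (RInt f a b) <= RInt g a b.
Proof.
  intros Hab Hf Hg H. apply Rabs_le_between. split.
  - assert (Hg' : ex_RInt (fun x => - g x) a b) by exact (ex_RInt_opp g a b Hg).
    assert (E : RInt (fun x => - g x) a b = - RInt g a b) by exact (RInt_opp g a b Hg).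
    rewrite <- E. apply RInt_le; auto. intros x Hx. specialize (H x (conj (Rlt_le _ _ (proj1 Hx)) (Rlt_le _ _ (proj2 Hx)))).
    apply Rabs_le_between in H. lra.
  - apply RInt_le; auto. intros x Hx. specialize (H x (conj (Rlt_le _ _ (proj1 Hx)) (Rlt_le _ _ (proj2 Hx)))).
    apply Rabs_le_between in H. lra.
Qed.

Lemma RInt_exp C k T : 0 < k -> RInt (fun s => C * exp (k * s)) 0 T = C * (exp (k * T) - 1) / k.
Proof.
  intro Hk. apply is_RInt_unique.
  replace (C * (exp (k * T) - 1) / k) with (minus (C * exp (k * T) / k) (C * exp (k * 0) / k)).
  - apply (is_RInt_derive (fun s => C * exp (k * s) / k)).
    + intros x _. auto_derive; auto. field. lra.
    + intros x _. apply (continuous_comp (fun s => k * s) (fun u => C * exp u)).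
      apply (cont_deriv _ _ k). apply d_lin.
      apply (cont_deriv _ _ (C * exp (k * x))). apply d_scal. apply is_derive_exp.
  - unfold minus, plus, opp. simpl. rewrite Rmult_0_r, exp_0. field. lra.
Qed.

Lemma lim_abs_le (u : nat -> R) (l c : R) : is_lim_seq u l -> (forall n, Rabs (u n) <= c) -> Rabs l <= c.
Proof.
  intros H Hb. assert (H' := is_lim_seq_abs u l H). simpl in H'.
  assert (Rbar_le (Rabs l) c).
  { eapply is_lim_seq_le; [exact Hb | exact H' | apply is_lim_seq_const]. }
  simpl in H0. exact H0.
Qed.

Lemma geom_zero a K : (forall n, Rabs a <= K * (/ 2) ^ n) -> a = 0.
Proof.
  intro H. assert (Hl : is_lim_seq (fun n => K * (/ 2) ^ n) 0).
  { replace (Finite 0) with (Rbar_mult K 0) by (simpl; f_equal; ring).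
    apply is_lim_seq_scal_l. apply is_lim_seq_geom. rewrite Rabs_pos_eq; lra. }
  assert (Rbar_le (Rabs a) 0).
  { eapply is_lim_seq_le; [exact H | apply is_lim_seq_const | exact Hl]. }
  simpl in H0. pose proof (Rabs_pos a). assert (Rabs a = 0) by lra.
  destruct (Req_dec a 0); auto. exfalso. apply Rabs_no_R0 in H3. lra.
Qed.

Ltac rabs := unfold Rabs in *; repeat (destruct (Rcase_abs _)); try lra.

Lemma rmax_lip t s : Rabs (Rmax 0 t - Rmax 0 s) <= Rabs (t - s).
Proof. unfold Rmax. destruct (Rle_dec 0 t); destruct (Rle_dec 0 s); rabs. Qed.

Lemma comp_lip (G : R -> R -> R) L (X Y : R -> R) K :
  (forall a b c d, Rabs (G a b - G c d) <= L * (Rabs (a - c) + Rabs (b - d))) -> 0 <= L ->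
  (forall t s, Rabs (X t - X s) <= K * Rabs (t - s)) ->
  (forall t s, Rabs (Y t - Y s) <= K * Rabs (t - s)) ->
  forall t s, Rabs (G (X t) (Y t) - G (X s) (Y s)) <= (2 * L * K) * Rabs (t - s).
Proof.
  intros HG HL HX HY t s. eapply Rle_trans. apply HG.
  pose proof (HX t s). pose proof (HY t s).
  replace (2 * L * K * Rabs (t - s)) with (L * (K * Rabs (t - s) + K * Rabs (t - s))) by ring.
  apply Rmult_le_compat_l; lra.
Qed.

Lemma ex_RInt_cexp C k a b : ex_RInt (fun s => C * exp (k * s)) a b.
Proof.
  apply (ex_RInt_continuous (V:=R_CompleteNormedModule)). intros z _.
  apply (continuous_comp (fun s => k * s) (fun u => C * exp u)).
  apply (cont_deriv _ _ k). apply d_lin.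
  apply (cont_deriv _ _ (C * exp (k * z))). apply d_scal. apply is_derive_exp.
Qed.

Lemma RInt_minus_R (f g : R -> R) a b : ex_RInt f a b -> ex_RInt g a b ->
  RInt (fun s => f s - g s) a b = RInt f a b - RInt g a b.
Proof. intros Hf Hg. exact (RInt_minus f g a b Hf Hg). Qed.

Lemma ex_RInt_minus_R (f g : R -> R) a b : ex_RInt f a b -> ex_RInt g a b ->
  ex_RInt (fun s => f s - g s) a b.
Proof. intros Hf Hg. exact (ex_RInt_minus f g a b Hf Hg). Qed.

Section Picard.
Variables (G1 G2 : R -> R -> R) (L M x0 y0 : R).
Hypotheses (HL : 0 < L) (HM : 0 <= M)
  (HG1 : forall a b c d, Rabs (G1 a b - G1 c d) <= L * (Rabs (a - c) + Rabs (b - d)))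
  (HG2 : forall a b c d, Rabs (G2 a b - G2 c d) <= L * (Rabs (a - c) + Rabs (b - d)))
  (HB1 : forall a b, Rabs (G1 a b) <= M) (HB2 : forall a b, Rabs (G2 a b) <= M).

Fixpoint it (n : nat) : (R -> R) * (R -> R) :=
  match n with
  | O => (fun _ => x0, fun _ => y0)
  | S n => let p := it n in
      (fun t => x0 + RInt (fun s => G1 (fst p s) (snd p s)) 0 (Rmax 0 t),
       fun t => y0 + RInt (fun s => G2 (fst p s) (snd p s)) 0 (Rmax 0 t))
  end.

Definition Xn n := fst (it n).
Definition Yn n := snd (it n).
Definition gn n s := G1 (Xn n s) (Yn n s).
Definition hn n s := G2 (Xn n s) (Yn n s).

Lemma Xn_S n t : Xn (S n) t = x0 + RInt (gn n) 0 (Rmax 0 t).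
Proof. reflexivity. Qed.
Lemma Yn_S n t : Yn (S n) t = y0 + RInt (hn n) 0 (Rmax 0 t).
Proof. reflexivity. Qed.

Lemma it_lip n : (forall t s, Rabs (Xn n t - Xn n s) <= M * Rabs (t - s)) /\
                 (forall t s, Rabs (Yn n t - Yn n s) <= M * Rabs (t - s)).
Proof.
  induction n as [|n [IX IY]].
  - split; intros t s; simpl; unfold Xn, Yn; simpl;
      replace (_ - _) with 0 by ring; rewrite Rabs_R0; apply Rmult_le_pos; auto; apply Rabs_pos.
  - assert (Hg := comp_lip G1 L (Xn n) (Yn n) M HG1 (Rlt_le _ _ HL) IX IY).
    assert (Hh := comp_lip G2 L (Xn n) (Yn n) M HG2 (Rlt_le _ _ HL) IX IY).
    split; intros t s.
    + rewrite !Xn_S.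
      replace (x0 + RInt (gn n) 0 (Rmax 0 t) - (x0 + RInt (gn n) 0 (Rmax 0 s)))
        with (RInt (gn n) 0 (Rmax 0 t) - RInt (gn n) 0 (Rmax 0 s)) by ring.
      rewrite RInt_diff by (apply (ex_RInt_lip _ _ _ _ Hg)).
      eapply Rle_trans. apply abs_RInt_const. apply (ex_RInt_lip _ _ _ _ Hg).
      intros; apply HB1. apply Rmult_le_compat_l; auto. apply rmax_lip.
    + rewrite !Yn_S.
      replace (y0 + RInt (hn n) 0 (Rmax 0 t) - (y0 + RInt (hn n) 0 (Rmax 0 s)))
        with (RInt (hn n) 0 (Rmax 0 t) - RInt (hn n) 0 (Rmax 0 s)) by ring.
      rewrite RInt_diff by (apply (ex_RInt_lip _ _ _ _ Hh)).
      eapply Rle_trans. apply abs_RInt_const. apply (ex_RInt_lip _ _ _ _ Hh).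
      intros; apply HB2. apply Rmult_le_compat_l; auto. apply rmax_lip.
Qed.

Lemma gn_lip n t s : Rabs (gn n t - gn n s) <= (2 * L * M) * Rabs (t - s).
Proof. destruct (it_lip n) as [IX IY]. apply (comp_lip G1 L (Xn n) (Yn n) M HG1 (Rlt_le _ _ HL) IX IY). Qed.
Lemma hn_lip n t s : Rabs (hn n t - hn n s) <= (2 * L * M) * Rabs (t - s).
Proof. destruct (it_lip n) as [IX IY]. apply (comp_lip G2 L (Xn n) (Yn n) M HG2 (Rlt_le _ _ HL) IX IY). Qed.
Lemma ex_gn n a b : ex_RInt (gn n) a b.
Proof. apply (ex_RInt_lip _ (2 * L * M)). apply gn_lip. Qed.
Lemma ex_hn n a b : ex_RInt (hn n) a b.
Proof. apply (ex_RInt_lip _ (2 * L * M)). apply hn_lip. Qed.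

Definition Cf t := M / L * exp (4 * L * Rmax 0 t).

Lemma Cf_nonneg t : 0 <= Cf t.
Proof. unfold Cf. apply Rmult_le_pos. apply Rdiv_le_0_compat; lra. left; apply exp_pos. Qed.

Lemma Cf_mono s t : 0 <= s <= t -> Cf s <= Cf t.
Proof.
  intros H. unfold Cf. apply Rmult_le_compat_l. apply Rdiv_le_0_compat; lra.
  apply exp_le_exp. rewrite !Rmax_right by lra. nra.
Qed.

Lemma diff_bound n t : Rabs (Xn (S n) t - Xn n t) + Rabs (Yn (S n) t - Yn n t) <= Cf t * (/ 2) ^ n.
Proof.
  revert t. induction n as [|n IH]; intro t.
  - set (T := Rmax 0 t). assert (HT : 0 <= T) by apply Rmax_l.
    rewrite Xn_S, Yn_S. change (Xn 0 t) with x0. change (Yn 0 t) with y0. fold T.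
    assert (E1 : x0 + RInt (gn 0) 0 T - x0 = RInt (gn 0) 0 T) by ring.
    assert (E2 : y0 + RInt (hn 0) 0 T - y0 = RInt (hn 0) 0 T) by ring.
    rewrite E1, E2.
    pose proof (abs_RInt_const (gn 0) 0 T M (ex_gn 0 0 T) (fun x _ => HB1 _ _)).
    pose proof (abs_RInt_const (hn 0) 0 T M (ex_hn 0 0 T) (fun x _ => HB2 _ _)).
    replace (T - 0) with T in * by ring. rewrite (Rabs_pos_eq T) in H, H0 by lra.
    unfold Cf. fold T. rewrite Rmult_1_r.
    pose proof (exp_ineq1_le (4 * L * T)).
    assert (M / L * (4 * L * T) <= M / L * exp (4 * L * T)) by (apply Rmult_le_compat_l; [apply Rdiv_le_0_compat|]; lra).
    replace (M / L * (4 * L * T)) with (4 * (M * T)) in H2 by (field; lra).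
    assert (0 <= M * T) by (apply Rmult_le_pos; lra). lra.
  - set (T := Rmax 0 t). assert (HT : 0 <= T) by apply Rmax_l.
    rewrite !Xn_S, !Yn_S. fold T.
    replace (x0 + RInt (gn (S n)) 0 T - (x0 + RInt (gn n) 0 T)) with (RInt (gn (S n)) 0 T - RInt (gn n) 0 T) by ring.
    replace (y0 + RInt (hn (S n)) 0 T - (y0 + RInt (hn n) 0 T)) with (RInt (hn (S n)) 0 T - RInt (hn n) 0 T) by ring.
    rewrite <- (RInt_minus_R (gn (S n)) (gn n) 0 T) by apply ex_gn.
    rewrite <- (RInt_minus_R (hn (S n)) (hn n) 0 T) by apply ex_hn.
    set (B := fun s => (M * (/ 2) ^ n) * exp ((4 * L) * s)).
    assert (Hpt : forall s, 0 <= s <= T -> L * (Rabs (Xn (S n) s - Xn n s) + Rabs (Yn (S n) s - Yn n s)) <= B s).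
    { intros s Hs. eapply Rle_trans. apply Rmult_le_compat_l. lra. apply IH.
      unfold Cf, B. rewrite Rmax_right by lra. apply Req_le. field. lra. }
    assert (Hg : Rabs (RInt (fun s => gn (S n) s - gn n s) 0 T) <= RInt B 0 T).
    { apply RInt_abs_bound; auto.
      - apply ex_RInt_minus_R; [apply ex_gn | apply ex_gn].
      - apply ex_RInt_cexp.
      - intros s Hs. unfold gn. eapply Rle_trans; [apply HG1 | apply Hpt; exact Hs]. }
    assert (Hh : Rabs (RInt (fun s => hn (S n) s - hn n s) 0 T) <= RInt B 0 T).
    { apply RInt_abs_bound; auto.
      - apply ex_RInt_minus_R; [apply ex_hn | apply ex_hn].
      - apply ex_RInt_cexp.
      - intros s Hs. unfold hn. eapply Rle_trans; [apply HG2 | apply Hpt; exact Hs]. }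
    unfold B in Hg, Hh. rewrite RInt_exp in Hg, Hh by lra.
    unfold Cf. fold T. simpl.
    assert (0 <= M * (/ 2) ^ n) by (apply Rmult_le_pos; [lra | apply pow_le; lra]).
    assert (E : M / L * exp (4 * L * T) * (/ 2 * (/ 2) ^ n) - 2 * (M * (/ 2) ^ n * (exp (4 * L * T) - 1) / (4 * L))
                = (M * (/ 2) ^ n) / (2 * L)) by (field; lra).
    assert (0 <= (M * (/ 2) ^ n) / (2 * L)) by (apply Rdiv_le_0_compat; lra).
    lra.
Qed.


Lemma tail n k t : Rabs (Xn (n + k) t - Xn n t) + Rabs (Yn (n + k) t - Yn n t) <= 2 * Cf t * ((/ 2) ^ n - (/ 2) ^ (n + k)).
Proof.
  induction k as [|k IH].
  - rewrite Nat.add_0_r. replace (Xn n t - Xn n t) with 0 by ring. replace (Yn n t - Yn n t) with 0 by ring.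
    rewrite Rabs_R0. replace ((/ 2) ^ n - (/ 2) ^ n) with 0 by ring. lra.
  - rewrite Nat.add_succ_r. pose proof (diff_bound (n + k) t).
    assert (T1 : Rabs (Xn (S (n + k)) t - Xn n t) <= Rabs (Xn (S (n + k)) t - Xn (n + k) t) + Rabs (Xn (n + k) t - Xn n t)).
    { replace (Xn (S (n + k)) t - Xn n t) with ((Xn (S (n + k)) t - Xn (n + k) t) + (Xn (n + k) t - Xn n t)) by ring. apply Rabs_triang. }
    assert (T2 : Rabs (Yn (S (n + k)) t - Yn n t) <= Rabs (Yn (S (n + k)) t - Yn (n + k) t) + Rabs (Yn (n + k) t - Yn n t)).
    { replace (Yn (S (n + k)) t - Yn n t) with ((Yn (S (n + k)) t - Yn (n + k) t) + (Yn (n + k) t - Yn n t)) by ring. apply Rabs_triang. }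
    simpl pow. lra.
Qed.

Lemma tailX n k t : Rabs (Xn (n + k) t - Xn n t) <= 2 * Cf t * (/ 2) ^ n.
Proof.
  pose proof (tail n k t). pose proof (Rabs_pos (Yn (n + k) t - Yn n t)).
  assert (0 <= 2 * Cf t * (/ 2) ^ (n + k)) by (apply Rmult_le_pos; [pose proof (Cf_nonneg t); lra | apply pow_le; lra]).
  lra.
Qed.

Lemma tailY n k t : Rabs (Yn (n + k) t - Yn n t) <= 2 * Cf t * (/ 2) ^ n.
Proof.
  pose proof (tail n k t). pose proof (Rabs_pos (Xn (n + k) t - Xn n t)).
  assert (0 <= 2 * Cf t * (/ 2) ^ (n + k)) by (apply Rmult_le_pos; [pose proof (Cf_nonneg t); lra | apply pow_le; lra]).
  lra.
Qed.

Lemma cauchy_gen (u : nat -> R) C : 0 <= C -> (forall n k, Rabs (u (n + k)%nat - u n) <= C * (/ 2) ^ n) ->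
  ex_lim_seq_cauchy u.
Proof.
  intros HC H eps.
  destruct (pow_lt_1_zero (/ 2)) with (y := eps / (2 * C + 1)) as [N HN].
  { rewrite Rabs_pos_eq; lra. }
  { apply Rdiv_lt_0_compat; [apply cond_pos | lra]. }
  exists N. intros n m Hn Hm.
  specialize (HN N (Nat.le_refl N)). rewrite Rabs_pos_eq in HN by (apply pow_le; lra).
  assert (E1 : n = (N + (n - N))%nat) by lia. assert (E2 : m = (N + (m - N))%nat) by lia.
  pose proof (H N (n - N)%nat). pose proof (H N (m - N)%nat).
  rewrite <- E1 in H0. rewrite <- E2 in H1.
  replace (u n - u m) with ((u n - u N) - (u m - u N)) by ring.
  eapply Rle_lt_trans. apply Rabs_triang. rewrite Rabs_Ropp.
  assert (C * (/ 2) ^ N <= C * (eps / (2 * C + 1))) by (apply Rmult_le_compat_l; lra).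
  assert (2 * (C * (eps / (2 * C + 1))) < eps).
  { replace (2 * (C * (eps / (2 * C + 1)))) with (eps * (2 * C / (2 * C + 1))) by (field; lra).
    pose proof (cond_pos eps).
    assert (2 * C / (2 * C + 1) < 1).
    { apply Rmult_lt_reg_r with (2 * C + 1). lra. unfold Rdiv. rewrite Rmult_assoc, Rinv_l by lra. lra. }
    nra. }
  lra.
Qed.

Definition Xl t := real (Lim_seq (fun n => Xn n t)).
Definition Yl t := real (Lim_seq (fun n => Yn n t)).

Lemma Xl_lim t : is_lim_seq (fun n => Xn n t) (Xl t).
Proof.
  unfold Xl. apply Lim_seq_correct'. apply ex_lim_seq_cauchy_corr.
  apply (cauchy_gen _ (2 * Cf t)). pose proof (Cf_nonneg t); lra. intros; apply tailX.
Qed.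

Lemma Yl_lim t : is_lim_seq (fun n => Yn n t) (Yl t).
Proof.
  unfold Yl. apply Lim_seq_correct'. apply ex_lim_seq_cauchy_corr.
  apply (cauchy_gen _ (2 * Cf t)). pose proof (Cf_nonneg t); lra. intros; apply tailY.
Qed.

Lemma Xl_near n t : Rabs (Xl t - Xn n t) <= 2 * Cf t * (/ 2) ^ n.
Proof.
  apply (lim_abs_le (fun k => Xn (k + n) t - Xn n t)).
  - apply is_lim_seq_minus'. apply (is_lim_seq_incr_n (fun k => Xn k t) n). apply Xl_lim. apply is_lim_seq_const.
  - intro k. rewrite Nat.add_comm. apply tailX.
Qed.

Lemma Yl_near n t : Rabs (Yl t - Yn n t) <= 2 * Cf t * (/ 2) ^ n.
Proof.
  apply (lim_abs_le (fun k => Yn (k + n) t - Yn n t)).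
  - apply is_lim_seq_minus'. apply (is_lim_seq_incr_n (fun k => Yn k t) n). apply Yl_lim. apply is_lim_seq_const.
  - intro k. rewrite Nat.add_comm. apply tailY.
Qed.

Lemma Xl_lip t s : Rabs (Xl t - Xl s) <= M * Rabs (t - s).
Proof.
  apply (lim_abs_le (fun n => Xn n t - Xn n s)).
  - apply is_lim_seq_minus'; apply Xl_lim.
  - intro n. apply (it_lip n).
Qed.

Lemma Yl_lip t s : Rabs (Yl t - Yl s) <= M * Rabs (t - s).
Proof.
  apply (lim_abs_le (fun n => Yn n t - Yn n s)).
  - apply is_lim_seq_minus'; apply Yl_lim.
  - intro n. apply (it_lip n).
Qed.

Lemma Rmax00 : Rmax 0 0 = 0.
Proof. unfold Rmax. destruct (Rle_dec 0 0); lra. Qed.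

Lemma Xl_0 : Xl 0 = x0.
Proof.
  unfold Xl. rewrite (Lim_seq_ext _ (fun _ => x0)). rewrite Lim_seq_const. reflexivity.
  intros [|n]. reflexivity. rewrite Xn_S, Rmax00, RInt_point. unfold zero. simpl. ring.
Qed.

Lemma Yl_0 : Yl 0 = y0.
Proof.
  unfold Yl. rewrite (Lim_seq_ext _ (fun _ => y0)). rewrite Lim_seq_const. reflexivity.
  intros [|n]. reflexivity. rewrite Yn_S, Rmax00, RInt_point. unfold zero. simpl. ring.
Qed.

Definition gl s := G1 (Xl s) (Yl s).
Definition hl s := G2 (Xl s) (Yl s).

Lemma gl_lip t s : Rabs (gl t - gl s) <= (2 * L * M) * Rabs (t - s).
Proof. apply (comp_lip G1 L Xl Yl M HG1 (Rlt_le _ _ HL) Xl_lip Yl_lip). Qed.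
Lemma hl_lip t s : Rabs (hl t - hl s) <= (2 * L * M) * Rabs (t - s).
Proof. apply (comp_lip G2 L Xl Yl M HG2 (Rlt_le _ _ HL) Xl_lip Yl_lip). Qed.
Lemma ex_gl a b : ex_RInt gl a b.
Proof. apply (ex_RInt_lip _ (2 * L * M)). apply gl_lip. Qed.
Lemma ex_hl a b : ex_RInt hl a b.
Proof. apply (ex_RInt_lip _ (2 * L * M)). apply hl_lip. Qed.

Lemma Xl_int t : 0 <= t -> Xl t = x0 + RInt gl 0 t.
Proof.
  intro Ht. cut (Xl t - (x0 + RInt gl 0 t) = 0). lra.
  apply (geom_zero _ (Cf t + 4 * L * Cf t * t)). intro n.
  assert (E : Xl t - (x0 + RInt gl 0 t) = (Xl t - Xn (S n) t) + RInt (fun s => gn n s - gl s) 0 t).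
  { rewrite (RInt_minus_R (gn n) gl 0 t (ex_gn n 0 t) (ex_gl 0 t)). rewrite Xn_S.
    replace (Rmax 0 t) with t by (rewrite Rmax_right; lra). ring. }
  rewrite E. eapply Rle_trans. apply Rabs_triang.
  pose proof (Xl_near (S n) t). simpl pow in H.
  assert (Hb : Rabs (RInt (fun s => gn n s - gl s) 0 t) <= (4 * L * Cf t * (/ 2) ^ n) * Rabs (t - 0)).
  { apply abs_RInt_const. apply ex_RInt_minus_R; [apply ex_gn | apply ex_gl].
    intros s Hs. rewrite Rmin_left, Rmax_right in Hs by lra.
    unfold gn, gl. eapply Rle_trans. apply HG1.
    pose proof (Xl_near n s). pose proof (Yl_near n s).
    rewrite <- Rabs_Ropp in H0, H1. rewrite Ropp_minus_distr in H0, H1.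
    pose proof (Cf_mono s t Hs).
    assert (2 * Cf s * (/ 2) ^ n <= 2 * Cf t * (/ 2) ^ n) by (apply Rmult_le_compat_r; [apply pow_le; lra | lra]).
    replace (4 * L * Cf t * (/ 2) ^ n) with (L * (2 * Cf t * (/ 2) ^ n + 2 * Cf t * (/ 2) ^ n)) by ring.
    apply Rmult_le_compat_l; lra. }
  rewrite Rminus_0_r, (Rabs_pos_eq t) in Hb by lra.
  assert (E2 : (Cf t + 4 * L * Cf t * t) * (/ 2) ^ n = 2 * Cf t * (/ 2 * (/ 2) ^ n) + 4 * L * Cf t * (/ 2) ^ n * t) by field.
  rewrite E2. lra.
Qed.

Lemma Yl_int t : 0 <= t -> Yl t = y0 + RInt hl 0 t.
Proof.
  intro Ht. cut (Yl t - (y0 + RInt hl 0 t) = 0). lra.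
  apply (geom_zero _ (Cf t + 4 * L * Cf t * t)). intro n.
  assert (E : Yl t - (y0 + RInt hl 0 t) = (Yl t - Yn (S n) t) + RInt (fun s => hn n s - hl s) 0 t).
  { rewrite (RInt_minus_R (hn n) hl 0 t (ex_hn n 0 t) (ex_hl 0 t)). rewrite Yn_S.
    replace (Rmax 0 t) with t by (rewrite Rmax_right; lra). ring. }
  rewrite E. eapply Rle_trans. apply Rabs_triang.
  pose proof (Yl_near (S n) t). simpl pow in H.
  assert (Hb : Rabs (RInt (fun s => hn n s - hl s) 0 t) <= (4 * L * Cf t * (/ 2) ^ n) * Rabs (t - 0)).
  { apply abs_RInt_const. apply ex_RInt_minus_R; [apply ex_hn | apply ex_hl].
    intros s Hs. rewrite Rmin_left, Rmax_right in Hs by lra.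
    unfold hn, hl. eapply Rle_trans. apply HG2.
    pose proof (Xl_near n s). pose proof (Yl_near n s).
    rewrite <- Rabs_Ropp in H0, H1. rewrite Ropp_minus_distr in H0, H1.
    pose proof (Cf_mono s t Hs).
    assert (2 * Cf s * (/ 2) ^ n <= 2 * Cf t * (/ 2) ^ n) by (apply Rmult_le_compat_r; [apply pow_le; lra | lra]).
    replace (4 * L * Cf t * (/ 2) ^ n) with (L * (2 * Cf t * (/ 2) ^ n + 2 * Cf t * (/ 2) ^ n)) by ring.
    apply Rmult_le_compat_l; lra. }
  rewrite Rminus_0_r, (Rabs_pos_eq t) in Hb by lra.
  assert (E2 : (Cf t + 4 * L * Cf t * t) * (/ 2) ^ n = 2 * Cf t * (/ 2 * (/ 2) ^ n) + 4 * L * Cf t * (/ 2) ^ n * t) by field.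
  rewrite E2. lra.
Qed.

Lemma int_deriv (g : R -> R) c t : (forall a b, ex_RInt g a b) -> continuous g t ->
  is_derive (fun s => c + RInt g 0 s) t (g t).
Proof.
  intros He Hc. apply (d_eq _ _ (0 + g t)); [|ring].
  apply d_plus. apply (is_derive_const (K:=R_AbsRing) (V:=R_NormedModule)).
  apply (is_derive_RInt g (fun s => RInt g 0 s) 0 t).
  - apply filter_forall. intro b. apply (RInt_correct (V:=R_CompleteNormedModule)). apply He.
  - exact Hc.
Qed.

Lemma near_pos t : 0 < t -> locally t (fun s => 0 < s).
Proof.
  intro Ht. exists (mkposreal (t / 2) ltac:(lra)). intros s Hs.
  change (Rabs (s - t) < t / 2) in Hs. apply Rabs_def2 in Hs. lra.
Qed.

Lemma Xl_deriv t : 0 < t -> is_derive Xl t (gl t).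
Proof.
  intro Ht. apply (is_derive_ext_loc (fun s => x0 + RInt gl 0 s)).
  - eapply filter_imp; [| apply (near_pos t Ht)]. intros s Hs. simpl. rewrite Xl_int by lra. reflexivity.
  - apply int_deriv. apply ex_gl. apply (lip_cont _ (2 * L * M)). apply gl_lip.
Qed.

Lemma Yl_deriv t : 0 < t -> is_derive Yl t (hl t).
Proof.
  intro Ht. apply (is_derive_ext_loc (fun s => y0 + RInt hl 0 s)).
  - eapply filter_imp; [| apply (near_pos t Ht)]. intros s Hs. simpl. rewrite Yl_int by lra. reflexivity.
  - apply int_deriv. apply ex_hl. apply (lip_cont _ (2 * L * M)). apply hl_lip.
Qed.

End Picard.

Lemma picard (G1 G2 : R -> R -> R) (L M x0 y0 : R) : 0 < L -> 0 <= M ->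
  (forall a b c d, Rabs (G1 a b - G1 c d) <= L * (Rabs (a - c) + Rabs (b - d))) ->
  (forall a b c d, Rabs (G2 a b - G2 c d) <= L * (Rabs (a - c) + Rabs (b - d))) ->
  (forall a b, Rabs (G1 a b) <= M) -> (forall a b, Rabs (G2 a b) <= M) ->
  exists X Y : R -> R, X 0 = x0 /\ Y 0 = y0 /\ (forall t, continuous X t) /\ (forall t, continuous Y t) /\
    forall t, 0 < t -> is_derive X t (G1 (X t) (Y t)) /\ is_derive Y t (G2 (X t) (Y t)).
Proof.
  intros HL HM HG1 HG2 HB1 HB2.
  exists (Xl G1 G2 x0 y0), (Yl G1 G2 x0 y0).
  split. apply Xl_0. split. apply Yl_0.
  split. intro t. apply (lip_cont _ M). intros; apply (Xl_lip G1 G2 L M x0 y0); auto.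
  split. intro t. apply (lip_cont _ M). intros; apply (Yl_lip G1 G2 L M x0 y0); auto.
  intros t Ht. split.
  - apply (Xl_deriv G1 G2 L M x0 y0); auto.
  - apply (Yl_deriv G1 G2 L M x0 y0); auto.
Qed.


Definition clp (R1 z : R) := Rmax (- R1) (Rmin R1 z).
Definition psi (R1 z : R) := Rmax 0 (Rmin 1 (R1 - Rabs z)).

Lemma clp_lip R1 z w : 0 <= R1 -> Rabs (clp R1 z - clp R1 w) <= Rabs (z - w).
Proof. intro. unfold clp, Rmax, Rmin. repeat destruct Rle_dec; rabs. Qed.
Lemma clp_bnd R1 z : 0 <= R1 -> Rabs (clp R1 z) <= R1.
Proof. intro. unfold clp, Rmax, Rmin. repeat destruct Rle_dec; rabs. Qed.
Lemma clp_id R1 z : Rabs z <= R1 -> clp R1 z = z.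
Proof. intro. unfold clp, Rmax, Rmin. repeat destruct Rle_dec; rabs. Qed.
Lemma psi_lip R1 z w : Rabs (psi R1 z - psi R1 w) <= Rabs (z - w).
Proof. unfold psi, Rmax, Rmin. repeat destruct Rle_dec; rabs. Qed.
Lemma psi_rng R1 z : 0 <= psi R1 z <= 1.
Proof. unfold psi, Rmax, Rmin. repeat destruct Rle_dec; lra. Qed.
Lemma psi_one R1 z : Rabs z <= R1 - 1 -> psi R1 z = 1.
Proof. intro. unfold psi, Rmax, Rmin. repeat destruct Rle_dec; lra. Qed.
Lemma psi_pos R1 z : 0 < psi R1 z -> Rabs z <= R1.
Proof. unfold psi, Rmax, Rmin. repeat destruct Rle_dec; lra. Qed.

Section Cut.
Variables l1 l2 us dl ep be : R.
Hypotheses (Hl1 : 0 < l1) (Hl2 : 0 < l2) (Hdl : 0 < dl) (Hep : 0 < ep) (Hbe : 0 <= be).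

Lemma f_lip_box R1 a b a' b' : Rabs a <= R1 -> Rabs b <= R1 -> Rabs a' <= R1 -> Rabs b' <= R1 ->
  let P := exp R1 / l1 + (1 + ep) * (l2 * exp R1) in
  Rabs (f1m l1 l2 dl ep be a b - f1m l1 l2 dl ep be a' b') <= (1 + be / dl) * P * (Rabs (a - a') + Rabs (b - b')) /\
  Rabs (f2m l1 l2 dl ep be a b - f2m l1 l2 dl ep be a' b') <= (1 + be / dl) * P * (Rabs (a - a') + Rabs (b - b')).
Proof.
  intros Ha Hb Ha' Hb' P.
  pose proof (phi1_lip l1 R1 Hl1 a a' Ha Ha') as D1.
  pose proof (phi2_lip l2 R1 Hl2 b b' Hb Hb') as D2.
  set (u := Rabs (a - a') + Rabs (b - b')).
  assert (Hu1 := Rabs_pos (a - a')). assert (Hu2 := Rabs_pos (b - b')).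
  assert (HE : 0 < exp R1) by apply exp_pos.
  assert (c1 : 0 <= exp R1 / l1) by (apply Rdiv_le_0_compat; lra).
  assert (c2 : 0 <= (1 + ep) * (l2 * exp R1)) by (apply Rmult_le_pos; [lra | apply Rmult_le_pos; lra]).
  assert (E1 : exp R1 / l1 * Rabs (a - a') <= exp R1 / l1 * u) by (apply Rmult_le_compat_l; unfold u; lra).
  assert (E2 : (1 + ep) * (l2 * exp R1 * Rabs (b - b')) <= (1 + ep) * (l2 * exp R1) * u).
  { rewrite <- Rmult_assoc. apply Rmult_le_compat_l; auto. unfold u; lra. }
  assert (E2' : (1 + ep) * Rabs (phi2 l2 b - phi2 l2 b') <= (1 + ep) * (l2 * exp R1 * Rabs (b - b'))) by (apply Rmult_le_compat_l; lra).
  assert (Hph : Rabs (phm l1 l2 ep a b - phm l1 l2 ep a' b') <= P * u).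
  { unfold phm, P.
    replace (phi1 l1 a + (1 + ep) * phi2 l2 b - (phi1 l1 a' + (1 + ep) * phi2 l2 b'))
      with ((phi1 l1 a - phi1 l1 a') + (1 + ep) * (phi2 l2 b - phi2 l2 b')) by ring.
    eapply Rle_trans. apply Rabs_triang. rewrite Rabs_mult, (Rabs_pos_eq (1 + ep)) by lra. lra. }
  assert (Hs : be * Rabs (sfun dl (phm l1 l2 ep a b) - sfun dl (phm l1 l2 ep a' b')) <= be / dl * P * u).
  { pose proof (s_lip dl (phm l1 l2 ep a b) (phm l1 l2 ep a' b') Hdl).
    replace (be / dl * P * u) with (be * ((P * u) / dl)) by (field; lra).
    apply Rmult_le_compat_l; auto. eapply Rle_trans. exact H.
    unfold Rdiv. apply Rmult_le_compat_r. left; apply Rinv_0_lt_compat; lra. exact Hph. }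
  assert (HPu : 0 <= P * u) by (apply Rmult_le_pos; unfold P, u; lra).
  replace ((1 + be / dl) * P * u) with (P * u + be / dl * P * u) by ring.
  split.
  - unfold f1m.
    replace (- (1 + ep) * phi2 l2 b - be * sfun dl (phm l1 l2 ep a b) - (- (1 + ep) * phi2 l2 b' - be * sfun dl (phm l1 l2 ep a' b')))
      with (- ((1 + ep) * (phi2 l2 b - phi2 l2 b')) + - (be * (sfun dl (phm l1 l2 ep a b) - sfun dl (phm l1 l2 ep a' b')))) by ring.
    eapply Rle_trans. apply Rabs_triang. rewrite !Rabs_Ropp, !Rabs_mult, (Rabs_pos_eq (1 + ep)), (Rabs_pos_eq be) by lra.
    assert ((1 + ep) * (l2 * exp R1) * u <= P * u).
    { apply Rmult_le_compat_r. unfold u; lra. unfold P. lra. }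
    lra.
  - unfold f2m.
    replace (phi1 l1 a - ep * phi2 l2 b - be * sfun dl (phm l1 l2 ep a b) - (phi1 l1 a' - ep * phi2 l2 b' - be * sfun dl (phm l1 l2 ep a' b')))
      with ((phi1 l1 a - phi1 l1 a') + - (ep * (phi2 l2 b - phi2 l2 b')) + - (be * (sfun dl (phm l1 l2 ep a b) - sfun dl (phm l1 l2 ep a' b')))) by ring.
    eapply Rle_trans. apply Rabs_triang. rewrite !Rabs_Ropp.
    eapply Rle_trans. apply Rplus_le_compat_r. apply Rabs_triang.
    rewrite !Rabs_Ropp, !Rabs_mult, (Rabs_pos_eq ep), (Rabs_pos_eq be) by lra.
    assert (ep * Rabs (phi2 l2 b - phi2 l2 b') <= (1 + ep) * Rabs (phi2 l2 b - phi2 l2 b')) by (apply Rmult_le_compat_r; [apply Rabs_pos | lra]).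
    assert (exp R1 / l1 * u + (1 + ep) * (l2 * exp R1) * u = P * u) by (unfold P; ring).
    lra.
Qed.

Lemma f_bnd_box R1 a b : Rabs a <= R1 -> Rabs b <= R1 ->
  let Q := (1 + exp R1) / l1 + (1 + ep) * (l2 * (1 + exp R1)) in
  Rabs (f1m l1 l2 dl ep be a b) <= (1 + be / dl) * Q /\ Rabs (f2m l1 l2 dl ep be a b) <= (1 + be / dl) * Q.
Proof.
  intros Ha Hb Q.
  pose proof (phi1_bnd l1 R1 Hl1 a Ha) as B1. pose proof (phi2_bnd l2 R1 Hl2 b Hb) as B2.
  assert (HE : 0 < exp R1) by apply exp_pos.
  assert (Hph : Rabs (phm l1 l2 ep a b) <= Q).
  { unfold phm, Q. eapply Rle_trans. apply Rabs_triang. rewrite Rabs_mult, (Rabs_pos_eq (1 + ep)) by lra.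
    assert ((1 + ep) * Rabs (phi2 l2 b) <= (1 + ep) * (l2 * (1 + exp R1))) by (apply Rmult_le_compat_l; lra). lra. }
  assert (Hs : be * Rabs (sfun dl (phm l1 l2 ep a b)) <= be / dl * Q).
  { replace (be / dl * Q) with (be * (Q / dl)) by (field; lra). apply Rmult_le_compat_l; auto.
    eapply Rle_trans. apply s_abs; auto. unfold Rdiv. apply Rmult_le_compat_r. left; apply Rinv_0_lt_compat; lra. exact Hph. }
  assert (HQ : (1 + ep) * Rabs (phi2 l2 b) <= Q).
  { unfold Q. assert ((1 + ep) * Rabs (phi2 l2 b) <= (1 + ep) * (l2 * (1 + exp R1))) by (apply Rmult_le_compat_l; lra).
    assert (0 <= (1 + exp R1) / l1) by (apply Rdiv_le_0_compat; lra). lra. }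
  assert (HQ1 : Rabs (phi1 l1 a) + ep * Rabs (phi2 l2 b) <= Q).
  { unfold Q. assert (ep * Rabs (phi2 l2 b) <= (1 + ep) * (l2 * (1 + exp R1))).
    { assert (ep * Rabs (phi2 l2 b) <= (1 + ep) * Rabs (phi2 l2 b)) by (apply Rmult_le_compat_r; [apply Rabs_pos | lra]).
      assert ((1 + ep) * Rabs (phi2 l2 b) <= (1 + ep) * (l2 * (1 + exp R1))) by (apply Rmult_le_compat_l; lra). lra. }
    lra. }
  replace ((1 + be / dl) * Q) with (Q + be / dl * Q) by ring.
  split.
  - unfold f1m. replace (- (1 + ep) * phi2 l2 b - be * sfun dl (phm l1 l2 ep a b)) with (- ((1 + ep) * phi2 l2 b) + - (be * sfun dl (phm l1 l2 ep a b))) by ring.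
    eapply Rle_trans. apply Rabs_triang. rewrite !Rabs_Ropp, !Rabs_mult, (Rabs_pos_eq (1 + ep)), (Rabs_pos_eq be) by lra. lra.
  - unfold f2m. replace (phi1 l1 a - ep * phi2 l2 b - be * sfun dl (phm l1 l2 ep a b)) with (phi1 l1 a + - (ep * phi2 l2 b) + - (be * sfun dl (phm l1 l2 ep a b))) by ring.
    eapply Rle_trans. apply Rabs_triang. eapply Rle_trans. apply Rplus_le_compat_r. apply Rabs_triang.
    rewrite !Rabs_Ropp, !Rabs_mult, (Rabs_pos_eq ep), (Rabs_pos_eq be) by lra. lra.
Qed.

End Cut.

Lemma cut_lip (f : R -> R -> R) R1 Lf M1 : 0 <= R1 -> 0 <= Lf ->
  (forall a b a' b', Rabs a <= R1 -> Rabs b <= R1 -> Rabs a' <= R1 -> Rabs b' <= R1 ->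
     Rabs (f a b - f a' b') <= Lf * (Rabs (a - a') + Rabs (b - b'))) ->
  (forall a b, Rabs a <= R1 -> Rabs b <= R1 -> Rabs (f a b) <= M1) ->
  let G := fun a b => psi R1 a * psi R1 b * f (clp R1 a) (clp R1 b) in
  (forall a b a' b', Rabs (G a b - G a' b') <= (Lf + M1) * (Rabs (a - a') + Rabs (b - b'))) /\
  (forall a b, Rabs (G a b) <= M1).
Proof.
  intros HR HLf Hl Hb G.
  assert (Hcb : forall z, Rabs (clp R1 z) <= R1) by (intro; apply clp_bnd; auto).
  assert (HM1 : 0 <= M1) by (pose proof (Hb 0 0); rewrite Rabs_R0 in H; specialize (H ltac:(lra) ltac:(lra)); pose proof (Rabs_pos (f 0 0)); lra).
  split.
  - intros a b a' b'. unfold G.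
    pose proof (psi_rng R1 a). pose proof (psi_rng R1 b). pose proof (psi_rng R1 a'). pose proof (psi_rng R1 b').
    set (pa := psi R1 a) in *. set (pb := psi R1 b) in *. set (pa' := psi R1 a') in *. set (pb' := psi R1 b') in *.
    set (F := f (clp R1 a) (clp R1 b)). set (F' := f (clp R1 a') (clp R1 b')).
    assert (HF : Rabs (F - F') <= Lf * (Rabs (a - a') + Rabs (b - b'))).
    { eapply Rle_trans. apply Hl; auto. apply Rmult_le_compat_l; auto.
      pose proof (clp_lip R1 a a' HR). pose proof (clp_lip R1 b b' HR). lra. }
    assert (HF' : Rabs F' <= M1) by (apply Hb; auto).
    assert (Hpa := psi_lip R1 a a'). assert (Hpb := psi_lip R1 b b'). fold pa pa' pb pb' in Hpa, Hpb.
    replace (pa * pb * F - pa' * pb' * F') with (pa * pb * (F - F') + (pa * (pb - pb') + pb' * (pa - pa')) * F') by ring.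
    eapply Rle_trans. apply Rabs_triang. rewrite !Rabs_mult.
    rewrite (Rabs_pos_eq pa), (Rabs_pos_eq pb) by lra.
    assert (pa * pb <= 1) by nra.
    assert (pa * pb * Rabs (F - F') <= 1 * (Lf * (Rabs (a - a') + Rabs (b - b')))).
    { apply Rmult_le_compat; try lra. apply Rmult_le_pos; lra. apply Rabs_pos. }
    assert (Rabs (pa * (pb - pb') + pb' * (pa - pa')) <= Rabs (a - a') + Rabs (b - b')).
    { eapply Rle_trans. apply Rabs_triang. rewrite !Rabs_mult, (Rabs_pos_eq pa), (Rabs_pos_eq pb') by lra.
      assert (pa * Rabs (pb - pb') <= 1 * Rabs (b - b')) by (apply Rmult_le_compat; try lra; apply Rabs_pos).
      assert (pb' * Rabs (pa - pa') <= 1 * Rabs (a - a')) by (apply Rmult_le_compat; try lra; apply Rabs_pos).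
      lra. }
    assert (Rabs (pa * (pb - pb') + pb' * (pa - pa')) * Rabs F' <= (Rabs (a - a') + Rabs (b - b')) * M1).
    { apply Rmult_le_compat; auto; apply Rabs_pos. }
    lra.
  - intros a b. unfold G. pose proof (psi_rng R1 a). pose proof (psi_rng R1 b).
    rewrite !Rabs_mult, (Rabs_pos_eq (psi R1 a)), (Rabs_pos_eq (psi R1 b)) by lra.
    assert (Rabs (f (clp R1 a) (clp R1 b)) <= M1) by (apply Hb; auto).
    assert (psi R1 a * psi R1 b <= 1) by nra.
    assert (psi R1 a * psi R1 b * Rabs (f (clp R1 a) (clp R1 b)) <= 1 * M1).
    { apply Rmult_le_compat; try lra. apply Rmult_le_pos; lra. apply Rabs_pos. }
    lra.
Qed.

Section FC.
Variables l1 l2 us dl ep be : R.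
Hypotheses (Hl1 : 0 < l1) (Hl2 : 0 < l2) (Hdl : 0 < dl) (Hep : 0 < ep) (Hbe : 0 <= be).

Lemma DW_scale ka a b r dA dB : ka = 0 -> DW l1 l2 ep ka a b (r * dA) (r * dB) = r * DW l1 l2 ep ka a b dA dB.
Proof. intros ->. unfold DW. ring. Qed.

Lemma fcomplete : forward_complete (cl_f1 l1 l2 us dl ep be) (cl_f2 l1 l2 us dl ep be).
Proof.
  intros [a0 b0].
  set (v0 := Wk l1 l2 ep 0 a0 b0).
  assert (Hv0 : 0 <= v0).
  { unfold v0, Wk. pose proof (V1_nonneg l1 a0 Hl1). pose proof (V2_nonneg l2 b0 Hl2).
    assert (0 <= (1 + ep) * V2 l2 b0) by (apply Rmult_le_pos; lra). lra. }
  set (R0 := 1 + l1 * v0 + v0 / l2).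
  assert (HR0 : 1 <= R0).
  { unfold R0. assert (0 <= l1 * v0) by (apply Rmult_le_pos; lra).
    assert (0 <= v0 / l2) by (apply Rdiv_le_0_compat; lra). lra. }
  set (R1 := R0 + 1).
  set (P := exp R1 / l1 + (1 + ep) * (l2 * exp R1)).
  set (Q := (1 + exp R1) / l1 + (1 + ep) * (l2 * (1 + exp R1))).
  set (Lf := (1 + be / dl) * P). set (M1 := (1 + be / dl) * Q).
  assert (HE : 0 < exp R1) by apply exp_pos.
  assert (HLf : 0 <= Lf).
  { unfold Lf, P. apply Rmult_le_pos. assert (0 <= be / dl) by (apply Rdiv_le_0_compat; lra). lra.
    assert (0 <= exp R1 / l1) by (apply Rdiv_le_0_compat; lra).
    assert (0 <= (1 + ep) * (l2 * exp R1)) by (apply Rmult_le_pos; [lra | apply Rmult_le_pos; lra]). lra. }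
  set (f1 := f1m l1 l2 dl ep be). set (f2 := f2m l1 l2 dl ep be).
  destruct (cut_lip f1 R1 Lf M1) as [G1L G1B]; [unfold R1; lra | auto | | |].
  { intros. apply (f_lip_box l1 l2 dl ep be Hl1 Hl2 Hdl Hep Hbe R1); auto. }
  { intros. apply (f_bnd_box l1 l2 dl ep be Hl1 Hl2 Hdl Hep Hbe R1); auto. }
  destruct (cut_lip f2 R1 Lf M1) as [G2L G2B]; [unfold R1; lra | auto | | |].
  { intros. apply (f_lip_box l1 l2 dl ep be Hl1 Hl2 Hdl Hep Hbe R1); auto. }
  { intros. apply (f_bnd_box l1 l2 dl ep be Hl1 Hl2 Hdl Hep Hbe R1); auto. }
  set (G1 := fun a b => psi R1 a * psi R1 b * f1 (clp R1 a) (clp R1 b)) in *.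
  set (G2 := fun a b => psi R1 a * psi R1 b * f2 (clp R1 a) (clp R1 b)) in *.
  assert (HM1 : 0 <= M1).
  { unfold M1, Q. apply Rmult_le_pos. assert (0 <= be / dl) by (apply Rdiv_le_0_compat; lra). lra.
    assert (0 <= (1 + exp R1) / l1) by (apply Rdiv_le_0_compat; lra).
    assert (0 <= (1 + ep) * (l2 * (1 + exp R1))) by (apply Rmult_le_pos; [lra | apply Rmult_le_pos; lra]). lra. }
  destruct (picard G1 G2 (Lf + M1 + 1) M1 a0 b0) as [X [Y [HX0 [HY0 [HXc [HYc HXY]]]]]]; auto.
  { lra. }
  { intros. eapply Rle_trans. apply G1L. apply Rmult_le_compat_r. pose proof (Rabs_pos (a - c)); pose proof (Rabs_pos (b - d)); lra. lra. }
  { intros. eapply Rle_trans. apply G2L. apply Rmult_le_compat_r. pose proof (Rabs_pos (a - c)); pose proof (Rabs_pos (b - d)); lra. lra. }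
  assert (DWc : forall a b, DW l1 l2 ep 0 a b (G1 a b) (G2 a b) <= 0).
  { intros a b. unfold G1, G2. rewrite DW_scale by reflexivity.
    pose proof (psi_rng R1 a). pose proof (psi_rng R1 b).
    destruct (Req_dec (psi R1 a * psi R1 b) 0) as [E|E].
    - rewrite E. lra.
    - assert (0 < psi R1 a) by (destruct (Req_dec (psi R1 a) 0) as [E'|E']; [rewrite E' in E; lra | lra]).
      assert (0 < psi R1 b) by (destruct (Req_dec (psi R1 b) 0) as [E'|E']; [rewrite E' in E; lra | lra]).
      rewrite !clp_id by (apply psi_pos; auto).
      pose proof (DW0 l1 l2 dl ep be Hdl Hep Hbe a b). fold f1 f2 in H3.
      assert (0 <= psi R1 a * psi R1 b) by (apply Rmult_le_pos; lra).
      nra. }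
  assert (Hbox : forall t, 0 <= t -> Rabs (X t) <= R0 /\ Rabs (Y t) <= R0).
  { intros t Ht.
    assert (Hw : Wk l1 l2 ep 0 (X t) (Y t) <= v0).
    { unfold v0. rewrite <- HX0, <- HY0.
      apply (nonincr (fun t => Wk l1 l2 ep 0 (X t) (Y t)) (fun t => DW l1 l2 ep 0 (X t) (Y t) (G1 (X t) (Y t)) (G2 (X t) (Y t)))).
      - intros s Hs. destruct (HXY s Hs). apply W_deriv; auto.
      - intros s Hs. apply DWc.
      - apply W_lim; auto. exact (@filter_filter _ _ (at_right_proper_filter 0)).
        apply l_right0. apply HXc. apply l_right0. apply HYc.
      - exact Ht. }
    destruct (V_box l1 l2 ep Hl1 Hl2 Hep v0 _ _ Hw) as [B1 B2].
    assert (0 <= l1 * v0) by (apply Rmult_le_pos; lra). assert (0 <= v0 / l2) by (apply Rdiv_le_0_compat; lra).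
    unfold R0. lra. }
  assert (HG : forall t, 0 <= t -> G1 (X t) (Y t) = f1 (X t) (Y t) /\ G2 (X t) (Y t) = f2 (X t) (Y t)).
  { intros t Ht. destruct (Hbox t Ht) as [B1 B2]. unfold G1, G2.
    rewrite (psi_one R1 (X t)), (psi_one R1 (Y t)) by (unfold R1; lra).
    rewrite (clp_id R1 (X t)), (clp_id R1 (Y t)) by (unfold R1; lra). split; ring. }
  exists (fun t => (X t, Y t)). split; [| simpl; rewrite HX0, HY0; reflexivity].
  split; [| split].
  - simpl. apply (l_right0 X). apply HXc.
  - simpl. apply (l_right0 Y). apply HYc.
  - intros t Ht. destruct (HXY t Ht) as [D1 D2]. destruct (HG t (Rlt_le _ _ Ht)) as [E1 E2].
    rewrite (F1_eq l1 l2 us dl ep be Hdl), (F2_eq l1 l2 us dl ep be Hdl). simpl.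
    fold f1 f2. rewrite <- E1, <- E2. split; [exact D1 | exact D2].
Qed.

End FC.

Theorem theorem3 (l1 l2 ustar delta eps beta : R) :
  0 < l1 -> 0 < l2 -> 0 < ustar -> 0 < delta -> 0 < eps -> 0 <= beta ->
  eps * l2 + beta < ustar ->
  GAS (cl_f1 l1 l2 ustar delta eps beta) (cl_f2 l1 l2 ustar delta eps beta) /\
  LES (cl_f1 l1 l2 ustar delta eps beta) (cl_f2 l1 l2 ustar delta eps beta) /\
  (forall x : R -> R * R,
     is_solution (cl_f1 l1 l2 ustar delta eps beta)
                 (cl_f2 l1 l2 ustar delta eps beta) x ->
     forall t, 0 <= t -> 0 < u_fb l1 l2 ustar delta eps beta (x t)).
Proof.
  intros Hl1 Hl2 Hus Hdl Hep Hbe Hc.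
  split; [| split].
  - split; [| split; [| split; [| split]]].
    + eapply equil1; eauto.
    + eapply equil2; eauto.
    + eapply fcomplete; eauto.
    + eapply stable; eauto.
    + eapply attractive; eauto.
  - eapply les; eauto.
  - intros x _ t _. eapply u_pos; eauto.
Qed.
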